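(* Let $z_0\in\mathbb{C}$, $r>0$, and let $f$ be harmonic in $D=\{z\in\mathbb{C}:0<|z-z_0|<r\}$ with $$f(z)=\sum_{k=-n}^\infty a_k(z-z_0)^k+\overline{\sum_{k=-n}^\infty b_k(z-z_0)^k}+2A\log|z-z_0|,\qquad z\in D,$$ where $n\ge1$, $A\in\mathbb{C}$ and $|a_{-n}|\neq|b_{-n}|$. For $\eta\in\mathbb{C}$ put $c=\eta-(a_0+\overline{b_0})$, suppose $c\neq0$, and let $\zeta_1,\dots,\zeta_n$ be the $n$ solutions of $$(\zeta-z_0)^n=\frac{|a_{-n}|^2-|b_{-n}|^2}{\overline{a_{-n}}\,c-\overline{b_{-n}}\,\overline{c}}.$$ Then for all $\eta$ with $|c|$ (equivalently $|\eta|$) sufficiently large: (1) there exist exactly $n$ solutions of $f(z)=\eta$ near $z_0$; (2) the set $S=\{\zeta_1,\dots,\zeta_n\}$ is a prediction set for the solutions in (1), i.e., for each $j$ the harmonic Newton iteration for $f-\eta$ started at $\zeta_j$ converges, and $\zeta_j\mapsto H^\infty_{f-\eta}(\zeta_j)$ is a bijection from $S$ onto the set of these $n$ solutions.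
   Context: A harmonic mapping is a function $f$ with $\Delta f=4\partial_{\bar z}\partial_z f=0$, with Wirtinger derivatives $\partial_z=\frac12(\partial_x-i\partial_y)$, $\partial_{\bar z}=\frac12(\partial_x+i\partial_y)$. For a harmonic mapping $F$, the harmonic Newton map is $$H_F(z)=z-\frac{\overline{\partial_zF(z)}\,F(z)-\partial_{\bar z}F(z)\,\overline{F(z)}}{|\partial_zF(z)|^2-|\partial_{\bar z}F(z)|^2},$$ defined where the Jacobian $|\partial_zF|^2-|\partial_{\bar z}F|^2$ is nonzero (this is Newton's method for $F$ viewed as a map $\mathbb{R}^2\to\mathbb{R}^2$). The harmonic Newton iteration is $z_k=H_F(z_{k-1})$, and $H_F^\infty(z_0)=\lim_{k\to\infty}z_k$ when this limit exists. *)

(* Defs.v *)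
From Stdlib Require Import Reals ZArith List.
From Coquelicot Require Export Coquelicot.
Open Scope R_scope.

Definition Ci : C := (0, 1)%R.
Definition Czpow (z : C) (k : Z) : C :=
  match k with
  | Z0 => 1%C
  | Zpos p => Cpow z (Pos.to_nat p)
  | Zneg p => Cinv (Cpow z (Pos.to_nat p))
  end.

Definition dx (F : C -> C) (z : C) : C :=
  (Derive (fun t => fst (F (Cplus z (t, 0)))) 0,
   Derive (fun t => snd (F (Cplus z (t, 0)))) 0).
Definition dy (F : C -> C) (z : C) : C :=
  (Derive (fun t => fst (F (Cplus z (0, t)))) 0,
   Derive (fun t => snd (F (Cplus z (0, t)))) 0).

Definition dz (F : C -> C) (z : C) : C :=
  Cmult (RtoC (1/2)) (Cminus (dx F z) (Cmult Ci (dy F z))).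
Definition dzbar (F : C -> C) (z : C) : C :=
  Cmult (RtoC (1/2)) (Cplus (dx F z) (Cmult Ci (dy F z))).

Definition jac (F : C -> C) (z : C) : R :=
  (Cmod (dz F z))^2 - (Cmod (dzbar F z))^2.

(* harmonic Newton map (meaningful where jac F z <> 0) *)
Definition HN (F : C -> C) (z : C) : C :=
  Cminus z
    (Cdiv (Cminus (Cmult (Cconj (dz F z)) (F z)) (Cmult (dzbar F z) (Cconj (F z))))
          (RtoC (jac F z))).

Fixpoint HN_seq (F : C -> C) (z0 : C) (k : nat) : C :=
  match k with
  | O => z0
  | S k' => HN F (HN_seq F z0 k')
  end.

(* the harmonic Newton iteration started at z0 is well defined (Jacobian
   nonzero at every iterate) and converges to L, i.e. H_F^oo(z0) = L *)
Definition HN_converges_to (F : C -> C) (z0 L : C) : Prop :=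
  (forall k, jac F (HN_seq F z0 k) <> 0) /\
  filterlim (HN_seq F z0) eventually (locally L).

(* the k-th term (k = m - n) of the Laurent series sum_{k >= -n} a_k w^k *)
Definition laurent_term (a : Z -> C) (n : nat) (w : C) (m : nat) : C :=
  Cmult (a (Z.of_nat m - Z.of_nat n)%Z) (Czpow w (Z.of_nat m - Z.of_nat n)%Z).

(* Main.v *)
Require Import Defs.
From Stdlib Require Import Reals ZArith List Lra Lia Psatz ClassicalEpsilon.
From Coquelicot Require Import Coquelicot.
Open Scope R_scope.


Lemma Cmod_fst_le (z : C) : Rabs (fst z) <= Cmod z.
Proof. apply re_le_Cmod. Qed.
Lemma Cmod_snd_le (z : C) : Rabs (snd z) <= Cmod z.
Proof.
  unfold Cmod. destruct z as [x y]; simpl.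
  rewrite <- sqrt_Rsqr_abs. apply sqrt_le_1_alt. unfold Rsqr. nra.
Qed.

Lemma derive_from_bound (g : R -> R) (l K d : R) :
  0 < d -> 0 <= K ->
  (forall t, Rabs t < d -> Rabs (g t - g 0 - t * l) <= K * t ^ 2) ->
  Derive g 0 = l.
Proof.
  intros Hd HK H. apply is_derive_unique. apply is_derive_Reals.
  intros eps Heps.
  assert (Hp : 0 < Rmin d (eps / (K + 1))).
  { apply Rmin_pos; auto. apply Rdiv_lt_0_compat; lra. }
  exists (mkposreal _ Hp). intros h Hh0 Hh. simpl in Hh.
  rewrite Rplus_0_l.
  assert (Hh1 : Rabs h < d) by (eapply Rlt_le_trans; [apply Hh| apply Rmin_l]).
  assert (Hh2 : Rabs h < eps / (K+1)) by (eapply Rlt_le_trans; [apply Hh| apply Rmin_r]).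
  specialize (H h Hh1).
  replace ((g h - g 0) / h - l) with ((g h - g 0 - h * l) / h) by (field; auto).
  unfold Rdiv. rewrite Rabs_mult, Rabs_inv.
  assert (Ha : 0 < Rabs h) by (apply Rabs_pos_lt; auto).
  apply Rle_lt_trans with (K * Rabs h).
  { apply Rmult_le_reg_r with (Rabs h); auto.
    rewrite Rmult_assoc, Rinv_l by lra.
    replace (K * Rabs h * Rabs h) with (K * h ^ 2). lra.
    rewrite <- (pow2_abs h). ring. }
  apply Rle_lt_trans with ((K+1) * Rabs h). nra.
  apply Rmult_lt_reg_r with (/ (K+1)). apply Rinv_0_lt_compat; lra.
  rewrite (Rmult_comm (K+1)), Rmult_assoc, Rinv_r by lra. lra.
Qed.

Lemma Cmod_RtoC_pair (t : R) : Cmod (t, 0) = Rabs t.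
Proof. apply Cmod_R. Qed.
Lemma Cmod_im_pair (t : R) : Cmod (0, t) = Rabs t.
Proof. unfold Cmod; simpl. rewrite <- sqrt_Rsqr_abs. f_equal. unfold Rsqr; ring. Qed.

Lemma wirtinger_link (F : C -> C) (x a b : C) (K d : R) :
  0 < d -> 0 <= K ->
  (forall y, Cmod (y - x) < d ->
     Cmod (F y - F x - a * (y - x) - b * Cconj (y - x))%C <= K * Cmod (y - x)%C ^ 2) ->
  dz F x = a /\ dzbar F x = b.
Proof.
  intros Hd HK H.
  assert (Hx0 : forall u v : R, Cplus x (u, v) = (fst x + u, snd x + v)) by (intros; destruct x; reflexivity).
  assert (E0 : Cplus x (0,0) = x) by (rewrite Hx0; destruct x; simpl; f_equal; ring).
  assert (Hdx : dx F x = (fst a + fst b, snd a + snd b)).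
  { unfold dx. f_equal.
    - apply derive_from_bound with K d; auto. intros t Ht. simpl (fst (_,_)) in *. rewrite E0.
      assert (Hy : Cmod (Cplus x (t,0) - x) < d).
      { replace (Cplus x (t,0) - x)%C with ((t,0) : C). rewrite Cmod_RtoC_pair; auto.
        rewrite Hx0. destruct x; simpl. unfold Cminus, Cplus, Copp; simpl. f_equal; ring. }
      specialize (H _ Hy).
      replace (Cplus x (t,0) - x)%C with ((t,0) : C) in H.
      2:{ rewrite Hx0. destruct x; simpl. unfold Cminus, Cplus, Copp; simpl. f_equal; ring. }
      rewrite Cmod_RtoC_pair in H. rewrite <- pow2_abs.
      eapply Rle_trans; [|apply H]. eapply Rle_trans; [|apply Cmod_fst_le].
      right. f_equal. destruct a, b. destruct (F (Cplus x (t,0))), (F x). simpl. ring.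
    - apply derive_from_bound with K d; auto. intros t Ht. simpl (fst (_,_)) in *. rewrite E0.
      assert (Hy : Cmod (Cplus x (t,0) - x) < d).
      { replace (Cplus x (t,0) - x)%C with ((t,0) : C). rewrite Cmod_RtoC_pair; auto.
        rewrite Hx0. destruct x; simpl. unfold Cminus, Cplus, Copp; simpl. f_equal; ring. }
      specialize (H _ Hy).
      replace (Cplus x (t,0) - x)%C with ((t,0) : C) in H.
      2:{ rewrite Hx0. destruct x; simpl. unfold Cminus, Cplus, Copp; simpl. f_equal; ring. }
      rewrite Cmod_RtoC_pair in H. rewrite <- pow2_abs.
      eapply Rle_trans; [|apply H]. eapply Rle_trans; [|apply Cmod_snd_le].
      right. f_equal. destruct a, b. destruct (F (Cplus x (t,0))), (F x). simpl. ring. }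
  assert (Hdy : dy F x = (- snd a + snd b, fst a - fst b)).
  { unfold dy. f_equal.
    - apply derive_from_bound with K d; auto. intros t Ht. simpl (fst (_,_)) in *. rewrite E0.
      assert (Hy : Cmod (Cplus x (0,t) - x) < d).
      { replace (Cplus x (0,t) - x)%C with ((0,t) : C). rewrite Cmod_im_pair; auto.
        rewrite Hx0. destruct x; simpl. unfold Cminus, Cplus, Copp; simpl. f_equal; ring. }
      specialize (H _ Hy).
      replace (Cplus x (0,t) - x)%C with ((0,t) : C) in H.
      2:{ rewrite Hx0. destruct x; simpl. unfold Cminus, Cplus, Copp; simpl. f_equal; ring. }
      rewrite Cmod_im_pair in H. rewrite <- pow2_abs.
      eapply Rle_trans; [|apply H]. eapply Rle_trans; [|apply Cmod_fst_le].
      right. f_equal. destruct a, b. destruct (F (Cplus x (0,t))), (F x). simpl. ring.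
    - apply derive_from_bound with K d; auto. intros t Ht. simpl (fst (_,_)) in *. rewrite E0.
      assert (Hy : Cmod (Cplus x (0,t) - x) < d).
      { replace (Cplus x (0,t) - x)%C with ((0,t) : C). rewrite Cmod_im_pair; auto.
        rewrite Hx0. destruct x; simpl. unfold Cminus, Cplus, Copp; simpl. f_equal; ring. }
      specialize (H _ Hy).
      replace (Cplus x (0,t) - x)%C with ((0,t) : C) in H.
      2:{ rewrite Hx0. destruct x; simpl. unfold Cminus, Cplus, Copp; simpl. f_equal; ring. }
      rewrite Cmod_im_pair in H. rewrite <- pow2_abs.
      eapply Rle_trans; [|apply H]. eapply Rle_trans; [|apply Cmod_snd_le].
      right. f_equal. destruct a, b. destruct (F (Cplus x (0,t))), (F x). simpl. ring. }
  unfold dz, dzbar. rewrite Hdx, Hdy. destruct a, b. unfold Ci, Cmult, Cminus, Cplus, Copp, RtoC; simpl.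
  split; f_equal; field.
Qed.


Lemma Cmod_sub_lower (u v : C) : Cmod u - Cmod v <= Cmod (u + v)%C.
Proof.
  assert (H := Cmod_triangle (u + v)%C (- v)%C).
  replace (u + v + - v)%C with u in H by ring. rewrite Cmod_opp in H. lra.
Qed.

Lemma lin_lower (a b d : C) :
  Rabs (Cmod a - Cmod b) * Cmod d <= Cmod (a * d + b * Cconj d)%C.
Proof.
  assert (H1 := Cmod_sub_lower (a*d)%C (b * Cconj d)%C).
  assert (H2 := Cmod_sub_lower (b * Cconj d)%C (a*d)%C).
  rewrite !Cmod_mult, Cmod_conj in *. rewrite Cplus_comm in H2.
  unfold Rabs; destruct Rcase_abs; nra.
Qed.

Lemma newton_step_eq (x a b Fx : C) (D : R) :
  D = Cmod a ^ 2 - Cmod b ^ 2 -> D <> 0 ->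
  (a * (Cminus x (Cdiv (Cminus (Cmult (Cconj a) Fx) (Cmult b (Cconj Fx))) (RtoC D)) - x)
   + b * Cconj (Cminus x (Cdiv (Cminus (Cmult (Cconj a) Fx) (Cmult b (Cconj Fx))) (RtoC D)) - x))%C
  = (- Fx)%C.
Proof.
  intros HD HD0. rewrite !Cmod2_alt in HD. subst D.
  destruct x as [x1 x2], a as [a1 a2], b as [b1 b2], Fx as [f1 f2].
  unfold Cminus, Cdiv, Cmult, Cplus, Copp, Cinv, Cconj, RtoC, Re, Im in *; simpl in *.
  f_equal; field; intro H; apply HD0; nra.
Qed.

Lemma pow_le1 (x : R) (k : nat) : 0 <= x <= 1 -> x ^ k <= 1.
Proof. intros H. rewrite <- (pow1 k). apply pow_incr. lra. Qed.

Lemma pow2_lt_small (y : R) : 0 < y -> exists N, forall k, (N <= k)%nat -> (/2) ^ k < y.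
Proof.
  intros Hy. destruct (pow_lt_1_zero (/2)) with y as [N HN]; auto.
  rewrite Rabs_pos_eq; lra.
  exists N. intros k Hk. specialize (HN k Hk). rewrite Rabs_pos_eq in HN; auto.
  apply pow_le; lra.
Qed.

Lemma ball_C_of_Cmod (x y : C) (eps : R) : Cmod (y - x)%C < eps -> ball x eps y.
Proof. intros H. apply C_NormedModule_mixin_compat1. exact H. Qed.

Lemma Cmod_of_ball (x y : C) (eps : posreal) : ball x eps y -> Cmod (y - x)%C < 2 * eps.
Proof.
  intros H. assert (H' := C_NormedModule_mixin_compat2 x y eps H).
  change (minus y x) with (y - x)%C in H'.
  assert (sqrt 2 < 2).
  { rewrite <- (sqrt_square 2) at 2 by lra. apply sqrt_lt_1_alt. lra. }
  destruct eps; simpl in *. nra.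
Qed.

Lemma lim_norm_le (u : nat -> C) (L : C) (B : R) :
  filterlim u eventually (locally L) -> (forall N, Cmod (u N) <= B) -> Cmod L <= B.
Proof.
  intros Hl Hb. destruct (Rle_or_lt (Cmod L) B) as [|Hlt]; auto. exfalso.
  assert (He : 0 < (Cmod L - B) / 4) by lra.
  apply filterlim_locally with (eps := mkposreal _ He) in Hl.
  destruct Hl as [N HN]. specialize (HN N (le_n _)).
  apply Cmod_of_ball in HN. simpl in HN.
  assert (H2 := Cmod_sub_lower L (u N - L)%C).
  replace (L + (u N - L))%C with (u N) in H2 by ring.
  specialize (Hb N). lra.
Qed.

Lemma filterlim_C_char (u : nat -> C) (L : C) :
  filterlim u eventually (locally L) <->
  (forall e, 0 < e -> exists N, forall k, (N <= k)%nat -> Cmod (u k - L)%C < e).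
Proof.
  split.
  - intros H e He. assert (He' : 0 < e/2) by lra.
    apply filterlim_locally with (eps := mkposreal _ He') in H.
    destruct H as [N HN]. exists N. intros k Hk. specialize (HN k Hk).
    apply Cmod_of_ball in HN. simpl in HN. lra.
  - intros H. apply filterlim_locally. intros eps.
    destruct (H eps (cond_pos eps)) as [N HN]. exists N. intros k Hk.
    apply ball_C_of_Cmod. auto.
Qed.

Lemma Cmod_diff4 (a b c d : C) : Cmod (a - b - c - d)%C <= Cmod a + Cmod b + Cmod c + Cmod d.
Proof.
  unfold Cminus. eapply Rle_trans; [apply Cmod_triangle|].
  eapply Rle_trans; [apply Rplus_le_compat_r, Cmod_triangle|].
  eapply Rle_trans; [apply Rplus_le_compat_r, Rplus_le_compat_r, Cmod_triangle|].
  rewrite !Cmod_opp. lra.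
Qed.

Lemma Cmod_tri_sub (x y z : C) : Cmod (x - z)%C <= Cmod (x - y)%C + Cmod (y - z)%C.
Proof. replace (x - z)%C with ((x - y) + (y - z))%C by ring. apply Cmod_triangle. Qed.

Section Core.
Variables (F al be : C -> C) (x0 : C) (rho M K : R).
Hypothesis Hrho : 0 < rho.
Hypothesis HM : 0 < M.
Hypothesis HK : 0 <= K.
Hypothesis HT : forall x y, Cmod (x - x0)%C < rho -> Cmod (y - x0)%C < rho ->
  Cmod (F y - F x - al x * (y - x) - be x * Cconj (y - x))%C <= K * Cmod (y - x)%C ^ 2.
Hypothesis HI : forall x, Cmod (x - x0)%C < rho -> / M <= Rabs (Cmod (al x) - Cmod (be x)).
Hypothesis HS : 2 * (M * Cmod (F x0)) < rho.
Hypothesis HQ : 2 * rho * M * K < 1.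

Lemma core_inball x : Cmod (x - x0)%C < rho ->
  dz F x = al x /\ dzbar F x = be x /\ jac F x = Cmod (al x) ^ 2 - Cmod (be x) ^ 2 /\
  jac F x <> 0.
Proof.
  intros Hx.
  destruct (wirtinger_link F x (al x) (be x) K (rho - Cmod (x - x0)%C)) as [H1 H2]; auto.
  lra. intros y Hy. apply HT; auto. eapply Rle_lt_trans; [apply (Cmod_tri_sub y x x0)|]. lra.
  assert (Hj : jac F x = Cmod (al x) ^ 2 - Cmod (be x) ^ 2) by (unfold jac; rewrite H1, H2; auto).
  repeat split; auto. rewrite Hj.
  specialize (HI x Hx). assert (0 < / M) by (apply Rinv_0_lt_compat; auto).
  assert (Ha := Cmod_ge_0 (al x)). assert (Hb := Cmod_ge_0 (be x)).
  intro Hc. unfold Rabs in HI. destruct Rcase_abs in HI; nra.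
Qed.

Lemma core_step x : Cmod (x - x0)%C < rho ->
  (al x * (HN F x - x) + be x * Cconj (HN F x - x))%C = (- F x)%C /\
  Cmod (HN F x - x)%C <= M * Cmod (F x).
Proof.
  intros Hx. destruct (core_inball x Hx) as (H1 & H2 & H3 & H4).
  assert (E : (al x * (HN F x - x) + be x * Cconj (HN F x - x))%C = (- F x)%C).
  { unfold HN. rewrite H1, H2. apply newton_step_eq; auto. }
  split; auto.
  assert (Hl := lin_lower (al x) (be x) (HN F x - x)%C). rewrite E, Cmod_opp in Hl.
  specialize (HI x Hx).
  assert (0 <= Cmod (HN F x - x)%C) by apply Cmod_ge_0.
  apply Rmult_le_reg_l with (/ M). apply Rinv_0_lt_compat; auto.
  rewrite <- Rmult_assoc, Rinv_l by lra. nra.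
Qed.

Let eta := M * Cmod (F x0).

Lemma eta_nonneg : 0 <= eta.
Proof. unfold eta. assert (H := Cmod_ge_0 (F x0)). nra. Qed.

Lemma core_inv k :
  Cmod (HN_seq F x0 k - x0)%C <= 2 * eta * (1 - (/2) ^ k) /\
  M * Cmod (F (HN_seq F x0 k)) <= eta * (/2) ^ k /\
  Cmod (HN_seq F x0 (S k) - HN_seq F x0 k)%C <= eta * (/2) ^ k.
Proof.
  assert (He := eta_nonneg).
  assert (HMKe : M * K * eta <= / 4).
  { assert (0 <= M * K) by nra. unfold eta in *. nra. }
  induction k as [|k IH].
  - simpl. replace (x0 - x0)%C with (RtoC 0) by ring. rewrite Cmod_0.
    assert (Hb : Cmod (HN_seq F x0 0 - x0)%C < rho) by (simpl; replace (x0 - x0)%C with (RtoC 0) by ring; rewrite Cmod_0; auto).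
    destruct (core_step x0) as [_ Hs]. simpl in Hb; auto.
    fold eta in Hs. split; [lra|]. split; [unfold eta; lra|]. simpl. lra.
  - destruct IH as (IH1 & IH2 & IH3).
    assert (Hq : 0 < (/2) ^ k <= 1).
    { split. apply pow_lt; lra. apply pow_le1; lra. }
    set (xk := HN_seq F x0 k) in *.
    assert (Heta : 2 * eta < rho) by exact HS. assert (Hxk : Cmod (xk - x0)%C < rho) by nra.
    change (HN_seq F x0 (S k)) with (HN F xk) in IH3 |- *.
    destruct (core_step xk Hxk) as [E Hd].
    assert (Hx1 : Cmod (HN F xk - x0)%C <= 2 * eta * (1 - (/2) ^ S k)).
    { eapply Rle_trans; [apply (Cmod_tri_sub _ xk)|]. simpl. lra. }
    assert (Hx1' : Cmod (HN F xk - x0)%C < rho).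
    { assert (0 < (/2)^ S k) by (apply pow_lt; lra). nra. }
    assert (HF : Cmod (F (HN F xk)) <= K * Cmod (HN F xk - xk)%C ^ 2).
    { specialize (HT xk (HN F xk) Hxk Hx1').
      replace (F (HN F xk) - F xk - al xk * (HN F xk - xk) - be xk * Cconj (HN F xk - xk))%C
        with (F (HN F xk) - F xk - (al xk * (HN F xk - xk) + be xk * Cconj (HN F xk - xk)))%C
        in HT by ring.
      rewrite E in HT. replace (F (HN F xk) - F xk - - F xk)%C with (F (HN F xk)) in HT by ring.
      auto. }
    assert (HF2 : M * Cmod (F (HN F xk)) <= eta * (/2) ^ S k).
    { assert (Hd2 : Cmod (HN F xk - xk)%C <= eta * (/2)^k) by lra.
      assert (Hd0 : 0 <= Cmod (HN F xk - xk)%C) by apply Cmod_ge_0.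
      assert (Hsq : Cmod (HN F xk - xk)%C ^ 2 <= (eta * (/2)^k) ^ 2).
      { apply pow_incr. lra. }
      apply Rle_trans with (M * (K * (eta * (/2)^k) ^ 2)).
      { apply Rmult_le_compat_l. lra. eapply Rle_trans; [apply HF|]. apply Rmult_le_compat_l; auto. }
      assert (0 <= M * K) by nra.
      replace (M * (K * (eta * (/ 2) ^ k) ^ 2)) with ((M * K * eta) * (eta * (/2)^k * (/2)^k)) by ring.
      apply Rle_trans with (/4 * (eta * (/2)^k * (/2)^k)).
      apply Rmult_le_compat_r; auto. apply Rmult_le_pos; [|lra]. apply Rmult_le_pos; lra.
      simpl. nra. }
    split; auto. split; auto.
    destruct (core_step (HN F xk) Hx1') as [_ Hd'].
    change (HN_seq F x0 (S (S k))) with (HN F (HN F xk)). lra.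
Qed.

Lemma core_newton :
  exists L, HN_converges_to F x0 L /\ F L = 0%C /\ Cmod (L - x0)%C <= 2 * eta /\
    (forall y, Cmod (y - x0)%C < rho -> F y = 0%C -> y = L).
Proof.
  assert (He := eta_nonneg). assert (Heta : 2 * eta < rho) by exact HS.
  assert (Hball : forall k, Cmod (HN_seq F x0 k - x0)%C < rho).
  { intros k. destruct (core_inv k) as [H _]. assert (0 < (/2)^k) by (apply pow_lt; lra). nra. }
  set (d := fun j => (HN_seq F x0 (S j) - HN_seq F x0 j)%C).
  assert (Hex : ex_series (K := C_AbsRing) (V := C_CompleteNormedModule) d).
  { apply ex_series_le with (b := fun j => eta * (/2)^j).
    intros j. change (norm (d j)) with (Cmod (d j)). apply (core_inv j).
    exists (eta * / (1 - /2)).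
    apply (is_series_scal_l (K := R_AbsRing) (V := R_NormedModule) eta (fun j => (/2)^j)).
    apply is_series_geom. rewrite Rabs_pos_eq; lra. }
  destruct Hex as [Ssum HSer].
  assert (Hsum : forall N, sum_n d N = (HN_seq F x0 (S N) - x0)%C).
  { induction N. rewrite sum_O. unfold d. simpl. ring.
    rewrite sum_Sn, IHN. unfold d. unfold plus; simpl. ring. }
  set (L := (x0 + Ssum)%C).
  assert (Hlim : filterlim (HN_seq F x0) eventually (locally L)).
  { apply filterlim_C_char. intros e He'.
    apply (proj1 (filterlim_C_char (sum_n d) Ssum)) with (e := e) in HSer; auto.
    destruct HSer as [N HN]. exists (S N). intros k Hk. destruct k as [|k]; [lia|].
    specialize (HN k ltac:(lia)). rewrite Hsum in HN. unfold L.
    replace (HN_seq F x0 (S k) - (x0 + Ssum))%C with (HN_seq F x0 (S k) - x0 - Ssum)%C by ring. auto. }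
  assert (HL0 : Cmod (L - x0)%C <= 2 * eta).
  { apply (lim_norm_le (fun k => HN_seq F x0 k - x0)%C).
    - apply filterlim_C_char. intros e He'. apply (proj1 (filterlim_C_char _ _) Hlim) in He'.
      destruct He' as [N HN]. exists N. intros k Hk. specialize (HN k Hk).
      replace (HN_seq F x0 k - x0 - (L - x0))%C with (HN_seq F x0 k - L)%C by ring. auto.
    - intros N. destruct (core_inv N) as [H _]. assert (0 < (/2)^N) by (apply pow_lt; lra). nra. }
  assert (HLb : Cmod (L - x0)%C < rho) by lra.
  assert (HFL : F L = 0%C).
  { destruct (Req_dec (Cmod (F L)) 0) as [H0|H0]. apply Cmod_eq_0; auto. exfalso.
    assert (Hp : 0 < Cmod (F L)) by (assert (H := Cmod_ge_0 (F L)); lra).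
    set (A' := Cmod (al L) + Cmod (be L)).
    assert (HA' : 0 <= A') by (unfold A'; assert (H1 := Cmod_ge_0 (al L)); assert (H2 := Cmod_ge_0 (be L)); lra).
    set (e := Rmin 1 (Cmod (F L) / (4 * (A' + K + 1)))).
    assert (Hep : 0 < e). { unfold e. apply Rmin_pos. lra. apply Rdiv_lt_0_compat; lra. }
    destruct (proj1 (filterlim_C_char _ _) Hlim e Hep) as [N1 HN1].
    destruct (pow2_lt_small (Cmod (F L) * M / (4 * (eta + 1)))) as [N2 HN2].
    { apply Rdiv_lt_0_compat. nra. lra. }
    set (k := max N1 N2).
    specialize (HN1 k ltac:(lia)). specialize (HN2 k ltac:(lia)).
    destruct (core_inv k) as (_ & Hf & _).
    specialize (HT L (HN_seq F x0 k) HLb (Hball k)).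
    set (h := (HN_seq F x0 k - L)%C) in *.
    assert (Hh : Cmod h < e) by (unfold h; auto).
    assert (Hh0 : 0 <= Cmod h) by apply Cmod_ge_0.
    assert (Hdec : Cmod (F L) <= Cmod (F (HN_seq F x0 k)) + K * Cmod h ^ 2 + A' * Cmod h).
    { assert (Hc := Cmod_diff4 (F (HN_seq F x0 k))
          (F (HN_seq F x0 k) - F L - al L * h - be L * Cconj h)%C (al L * h)%C (be L * Cconj h)%C).
      replace (F (HN_seq F x0 k) - (F (HN_seq F x0 k) - F L - al L * h - be L * Cconj h) -
               al L * h - be L * Cconj h)%C with (F L) in Hc by ring.
      rewrite !Cmod_mult, Cmod_conj in Hc. unfold A'. nra. }
    assert (He1 : e <= 1) by (unfold e; apply Rmin_l).
    assert (He2 : e <= Cmod (F L) / (4 * (A' + K + 1))) by (unfold e; apply Rmin_r).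
    assert (Hfk : Cmod (F (HN_seq F x0 k)) <= Cmod (F L) / 4).
    { assert (Hq : 0 < (/2)^k) by (apply pow_lt; lra).
      apply Rmult_le_reg_l with M; auto.
      apply Rle_trans with (eta * (/2)^k); auto.
      apply Rle_trans with ((eta + 1) * (Cmod (F L) * M / (4 * (eta + 1)))).
      nra. right. field. lra. }
    assert (Hx : (A' + K + 1) * e <= Cmod (F L) / 4).
    { apply Rle_trans with ((A' + K + 1) * (Cmod (F L) / (4 * (A' + K + 1)))).
      apply Rmult_le_compat_l; lra. right. field. lra. }
    assert (Cmod h ^ 2 <= Cmod h) by (simpl; nra).
    assert (K * Cmod h ^ 2 + A' * Cmod h <= (A' + K + 1) * e) by nra.
    lra. }
  exists L. split; [split; auto|]. intros k. apply (core_inball _ (Hball k)).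
  split; auto. split; auto.
  intros y Hy Fy.
  destruct (Req_dec (Cmod (y - L)%C) 0) as [H0|H0].
  { apply Cmod_eq_0 in H0. replace y with (y - L + L)%C by ring. rewrite H0. ring. }
  exfalso. specialize (HT L y HLb Hy). rewrite Fy, HFL in HT.
  assert (Hl := lin_lower (al L) (be L) (y - L)%C).
  replace (0 - 0 - al L * (y - L) - be L * Cconj (y - L))%C
    with (- (al L * (y - L) + be L * Cconj (y - L)))%C in HT by ring.
  rewrite Cmod_opp in HT.
  specialize (HI L HLb).
  assert (Hp : 0 < Cmod (y - L)%C) by (assert (H := Cmod_ge_0 (y - L)%C); lra).
  assert (Hyl : Cmod (y - L)%C < 2 * rho).
  { eapply Rle_lt_trans; [apply (Cmod_tri_sub y x0 L)|].
    replace (x0 - L)%C with (- (L - x0))%C by ring. rewrite Cmod_opp. lra. }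
  assert (H1 : / M * Cmod (y - L)%C <= K * Cmod (y - L)%C ^ 2).
  { eapply Rle_trans; [|apply HT]. eapply Rle_trans; [|apply Hl]. apply Rmult_le_compat_r; auto. lra. }
  assert (H2 : / M <= K * Cmod (y - L)%C).
  { apply Rmult_le_reg_r with (Cmod (y - L)%C); auto. simpl in H1. nra. }
  assert (H3 : 1 <= M * K * Cmod (y - L)%C).
  { apply Rmult_le_compat_l with (r := M) in H2; [|lra]. rewrite Rinv_r in H2 by lra. nra. }
  assert (0 <= M * K) by nra. nra.
Qed.
End Core.


Lemma ptaylor_exact (x y : C) (R : R) (k : nat) :
  0 <= R -> Cmod x <= R -> Cmod y <= R ->
  Cmod (y ^ S k - x ^ S k - RtoC (INR (S k)) * x ^ k * (y - x))%C
    <= INR (S k) * INR k / 2 * R ^ (pred k) * Cmod (y - x)%C ^ 2.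
Proof.
  intros HR Hx Hy. induction k as [|k IH].
  - simpl. replace (y * 1 - x * 1 - RtoC 1 * 1 * (y - x))%C with (RtoC 0).
    rewrite Cmod_0. lra. apply injective_projections; simpl; ring.
  - replace (y ^ S (S k) - x ^ S (S k) - RtoC (INR (S (S k))) * x ^ S k * (y - x))%C
      with (y * (y ^ S k - x ^ S k - RtoC (INR (S k)) * x ^ k * (y - x))
            + RtoC (INR (S k)) * x ^ k * ((y - x) * (y - x)))%C.
    2:{ rewrite (S_INR (S k)), RtoC_plus. rewrite !Cpow_S. ring. }
    eapply Rle_trans; [apply Cmod_triangle|]. rewrite !Cmod_mult, Cmod_pow, Cmod_R.
    rewrite Rabs_pos_eq by (apply pos_INR).
    assert (H0 := Cmod_ge_0 (y - x)%C).
    assert (H1 := Cmod_ge_0 (y ^ S k - x ^ S k - RtoC (INR (S k)) * x ^ k * (y - x))%C).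
    assert (H2 : Cmod x ^ k <= R ^ k) by (apply pow_incr; split; [apply Cmod_ge_0|auto]).
    assert (H3 := pos_INR k).
    assert (H4 : 0 <= R ^ pred k) by (apply pow_le; auto).
    assert (HA : Cmod y * Cmod (y ^ S k - x ^ S k - RtoC (INR (S k)) * x ^ k * (y - x))%C
                 <= R * (INR (S k) * INR k / 2 * R ^ pred k * Cmod (y - x)%C ^ 2)).
    { apply Rmult_le_compat; auto. apply Cmod_ge_0. }
    assert (HB : INR (S k) * Cmod x ^ k * (Cmod (y - x)%C * Cmod (y - x)%C)
                 <= INR (S k) * R ^ k * Cmod (y - x)%C ^ 2).
    { simpl (_ ^ 2). rewrite Rmult_1_r. apply Rmult_le_compat_r. nra. apply Rmult_le_compat_l; auto. apply pos_INR. }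
    eapply Rle_trans. apply Rplus_le_compat; [apply HA| apply HB].
    destruct k as [|k].
    + simpl. lra.
    + simpl pred. rewrite !S_INR. simpl (R ^ S k). right. simpl. field.
Qed.

Lemma ptaylor (x y : C) (R : R) (m : nat) :
  0 < R -> Cmod x <= R -> Cmod y <= R ->
  R ^ 2 * Cmod (y ^ m - x ^ m - RtoC (INR m) * x ^ (pred m) * (y - x))%C
    <= INR m ^ 2 * R ^ m * Cmod (y - x)%C ^ 2.
Proof.
  intros HR Hx Hy. destruct m as [|k].
  - simpl. replace (1 - 1 - RtoC 0 * 1 * (y - x))%C with (RtoC 0).
    rewrite Cmod_0. nra. apply injective_projections; simpl; ring.
  - simpl pred. assert (H := ptaylor_exact x y R k ltac:(lra) Hx Hy).
    assert (H0 := Cmod_ge_0 (y - x)%C). assert (H3 := pos_INR k).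
    apply Rle_trans with (R ^ 2 * (INR (S k) * INR k / 2 * R ^ pred k * Cmod (y - x)%C ^ 2)).
    { apply Rmult_le_compat_l; auto. nra. }
    assert (H5 : 0 <= Cmod (y - x)%C ^ 2) by nra.
    destruct k as [|k].
    + simpl. nra.
    + simpl pred. rewrite !S_INR in *.
      replace (R ^ S (S k)) with (R ^ 2 * R ^ k) by (simpl; ring).
      assert (0 <= R ^ k) by (apply pow_le; lra).
      assert (0 <= R^2) by nra.
      set (P := R ^ 2 * R ^ k * Cmod (y - x)%C ^ 2).
      assert (HP : 0 <= P) by (unfold P; apply Rmult_le_pos; [apply Rmult_le_pos|]; auto).
      replace (R ^ 2 * ((INR k + 1 + 1) * (INR k + 1) / 2 * R ^ k * Cmod (y - x)%C ^ 2))
        with (((INR k + 1 + 1) * (INR k + 1) / 2) * P) by (unfold P; ring).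
      replace ((INR k + 1 + 1) ^ 2 * (R ^ 2 * R ^ k) * Cmod (y - x)%C ^ 2)
        with ((INR k + 1 + 1) ^ 2 * P) by (unfold P; ring).
      nra.
Qed.

Lemma Cmod_inv_le (x : C) (r0 : R) : 0 < r0 -> r0 <= Cmod x -> x <> 0%C /\ Cmod (/ x)%C <= / r0.
Proof.
  intros H0 H1. assert (Hx : x <> 0%C) by (intro E; subst; rewrite Cmod_0 in H1; lra).
  split; auto. rewrite Cmod_inv by auto. apply Rinv_le_contravar; auto.
Qed.

Lemma inv_taylor (n : nat) (x y : C) (r0 : R) :
  0 < r0 -> r0 <= Cmod x -> r0 <= Cmod y ->
  Cmod (/ y ^ n - / x ^ n + RtoC (INR n) * / x ^ (S n) * (y - x))%C
    <= (INR n ^ 2 + INR n) * (/ r0) ^ (n + 2) * Cmod (y - x)%C ^ 2.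
Proof.
  intros H0 Hx Hy.
  destruct (Cmod_inv_le x r0 H0 Hx) as [Hx0 Hxi].
  destruct (Cmod_inv_le y r0 H0 Hy) as [Hy0 Hyi].
  assert (HR : 0 < / r0) by (apply Rinv_0_lt_compat; auto).
  assert (Hh := Cmod_ge_0 (y - x)%C).
  destruct n as [|k].
  - simpl. replace (/ 1 - / 1 + RtoC 0 * / (x * 1) * (y - x))%C with (RtoC 0).
    rewrite Cmod_0. nra. field. auto.
  - set (u := (/ y)%C). set (v := (/ x)%C).
    assert (Huv : (u - v)%C = (- ((y - x) * u * v))%C) by (unfold u, v; field; auto).
    assert (Hid : (/ y ^ S k - / x ^ S k + RtoC (INR (S k)) * / x ^ S (S k) * (y - x))%C
      = ((u ^ S k - v ^ S k - RtoC (INR (S k)) * v ^ (pred (S k)) * (u - v))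
         + RtoC (INR (S k)) * v ^ S k * (y - x) * (v - u))%C).
    { rewrite Huv. unfold u, v. simpl pred. rewrite !Cpow_inv by auto. rewrite !Cpow_S.
      field. repeat split; auto; apply Cpow_nz; auto. }
    rewrite Hid.
    assert (Hu : Cmod u <= / r0) by auto. assert (Hv : Cmod v <= / r0) by auto.
    assert (Hp := ptaylor v u (/ r0) (S k) HR Hv Hu).
    assert (Hd : Cmod (u - v)%C <= Cmod (y - x)%C * (/ r0) ^ 2).
    { rewrite Huv, Cmod_opp, !Cmod_mult. simpl. rewrite Rmult_1_r.
      rewrite Rmult_assoc. apply Rmult_le_compat_l; auto.
      apply Rmult_le_compat; auto; apply Cmod_ge_0. }
    assert (Hd2 : Cmod (u - v)%C ^ 2 <= (Cmod (y - x)%C * (/ r0) ^ 2) ^ 2).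
    { apply pow_incr. split; auto. apply Cmod_ge_0. }
    eapply Rle_trans; [apply Cmod_triangle|].
    rewrite !Cmod_mult, Cmod_R, Cmod_pow. rewrite Rabs_pos_eq by apply pos_INR.
    replace (v - u)%C with (- (u - v))%C by ring. rewrite Cmod_opp.
    assert (Hk := pos_INR (S k)).
    assert (Hvk : Cmod v ^ S k <= (/ r0) ^ S k) by (apply pow_incr; split; auto; apply Cmod_ge_0).
    assert (HRk : 0 < (/ r0) ^ S k) by (apply pow_lt; auto).
    assert (HE : Cmod (u ^ S k - v ^ S k - RtoC (INR (S k)) * v ^ pred (S k) * (u - v))%C
                 <= INR (S k) ^ 2 * (/ r0) ^ (S k + 2) * Cmod (y - x)%C ^ 2).
    { apply Rmult_le_reg_l with ((/ r0) ^ 2). apply pow_lt; auto.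
      eapply Rle_trans; [apply Hp|].
      replace ((/ r0) ^ (S k + 2)) with ((/ r0) ^ S k * (/ r0) ^ 2) by (rewrite pow_add; ring).
      apply Rle_trans with (INR (S k) ^ 2 * (/ r0) ^ S k * (Cmod (y - x)%C * (/ r0) ^ 2) ^ 2).
      apply Rmult_le_compat_l; auto. apply Rmult_le_pos; [nra|lra].
      right. ring. }
    assert (HF : INR (S k) * Cmod v ^ S k * Cmod (y - x)%C * Cmod (u - v)%C
                 <= INR (S k) * (/ r0) ^ (S k + 2) * Cmod (y - x)%C ^ 2).
    { replace ((/ r0) ^ (S k + 2)) with ((/ r0) ^ S k * (/ r0) ^ 2) by (rewrite pow_add; ring).
      assert (0 <= Cmod (u - v)%C) by apply Cmod_ge_0.
      assert (0 <= Cmod v ^ S k) by (apply pow_le; apply Cmod_ge_0).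
      apply Rle_trans with (INR (S k) * (/ r0) ^ S k * Cmod (y - x)%C * (Cmod (y - x)%C * (/ r0) ^ 2)).
      apply Rmult_le_compat; try nra. apply Rmult_le_pos; [|auto]. apply Rmult_le_pos; nra.
      apply Rmult_le_compat_r; auto. apply Rmult_le_compat_l; auto.
      right. ring. }
    lra.
Qed.

Lemma pow_le_self (t : R) (n : nat) : (1 <= n)%nat -> 0 <= t <= 1 -> t ^ n <= t.
Proof.
  intros Hn Ht. destruct n as [|k]; [lia|]. simpl.
  assert (t ^ k <= 1) by (apply pow_le1; lra). assert (0 <= t^k) by (apply pow_le; lra). nra.
Qed.

Lemma pow_ge_self (t : R) (n : nat) : (1 <= n)%nat -> 1 <= t -> t <= t ^ n.
Proof.
  intros Hn Ht. destruct n as [|k]; [lia|]. simpl.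
  assert (1 <= t ^ k) by (apply pow_R1_Rle; lra). nra.
Qed.

Lemma unity_abs (u : C) (n : nat) : (1 <= n)%nat -> (u ^ n)%C = 1%C -> Cmod u = 1.
Proof.
  intros Hn Hu. assert (H := Cmod_pow u n). rewrite Hu, Cmod_1 in H.
  assert (H0 := Cmod_ge_0 u).
  destruct (Rlt_or_le (Cmod u) 1) as [H1|H1].
  - assert (Cmod u ^ n <= Cmod u) by (apply pow_le_self; auto; lra). lra.
  - destruct (Rle_lt_or_eq_dec 1 (Cmod u) H1) as [H2|H2]; auto.
    assert (Cmod u <= Cmod u ^ n) by (apply pow_ge_self; auto; lra). lra.
Qed.

Lemma unity_sep (u : C) (n : nat) : (1 <= n)%nat -> (u ^ n)%C = 1%C -> u <> 1%C ->
  1 <= INR n * Cmod (u - 1)%C.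
Proof.
  intros Hn Hu Hne. assert (Hm := unity_abs u n Hn Hu).
  assert (H1 : Cmod (RtoC 1) <= 1) by (rewrite Cmod_1; lra).
  assert (Hp := ptaylor 1%C u 1 n ltac:(lra) H1 ltac:(lra)).
  assert (E : (u ^ n - 1 ^ n - RtoC (INR n) * 1 ^ pred n * (u - 1))%C = (- (RtoC (INR n) * (u - 1)))%C)
    by (rewrite Hu, !Cpow_1_l; ring).
  rewrite E in Hp.
  rewrite Cmod_opp, Cmod_mult, Cmod_R, Rabs_pos_eq in Hp by apply pos_INR.
  rewrite !pow1 in Hp.
  assert (Hp0 : 0 < Cmod (u - 1)%C).
  { apply Cmod_gt_0. intro E0. apply Hne. replace u with (u - 1 + 1)%C by ring. rewrite E0. ring. }
  assert (Hn0 : 0 < INR n) by (apply lt_0_INR; lia).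
  assert (H3 : INR n * Cmod (u - 1)%C <= INR n ^ 2 * Cmod (u - 1)%C ^ 2) by lra.
  assert (H4 : 1 <= INR n * Cmod (u - 1)%C).
  { apply Rmult_le_reg_l with (INR n * Cmod (u - 1)%C). nra. nra. }
  auto.
Qed.

Lemma root_near (n : nat) (lam : R) : (1 <= n)%nat -> 0 < lam ->
  exists eps0, 0 < eps0 /\ forall s, Cmod (s ^ n - 1)%C <= eps0 ->
    exists w, (w ^ n)%C = 1%C /\ Cmod (s - w)%C < lam.
Proof.
  intros Hn Hl.
  set (M := 4 ^ n). set (K := INR n ^ 2 * 2 ^ n / 4).
  assert (HM : 0 < M) by (unfold M; apply pow_lt; lra).
  assert (HK : 0 <= K) by (unfold K; assert (0 < 2 ^ n) by (apply pow_lt; lra); assert (0 <= INR n ^ 2) by (apply pow_le, pos_INR); nra).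
  set (rho := Rmin (Rmin (/4) (lam / 2)) (/ (4 * M * K + 1))).
  assert (Hr1 : rho <= /4) by (unfold rho; eapply Rle_trans; [apply Rmin_l|apply Rmin_l]).
  assert (Hr2 : rho <= lam / 2) by (unfold rho; eapply Rle_trans; [apply Rmin_l|apply Rmin_r]).
  assert (Hr3 : rho <= / (4 * M * K + 1)) by (unfold rho; apply Rmin_r).
  assert (Hr0 : 0 < rho).
  { unfold rho. repeat apply Rmin_pos; try lra. apply Rinv_0_lt_compat. nra. }
  exists (Rmin (/2) (rho / (4 * M))). split.
  { apply Rmin_pos. lra. apply Rdiv_lt_0_compat; lra. }
  intros s Hs.
  assert (Hs1 : Cmod (s ^ n - 1)%C <= /2) by (eapply Rle_trans; [apply Hs|apply Rmin_l]).
  assert (Hs2 : Cmod (s ^ n - 1)%C <= rho / (4 * M)) by (eapply Rle_trans; [apply Hs|apply Rmin_r]).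
  assert (Hsn : /2 <= Cmod s ^ n <= 3/2).
  { rewrite <- Cmod_pow. assert (H1 := Cmod_sub_lower 1%C (s ^ n - 1)%C).
    assert (H2 := Cmod_triangle 1%C (s ^ n - 1)%C).
    replace (1 + (s ^ n - 1))%C with (s ^ n)%C in H1, H2 by ring. rewrite Cmod_1 in H1, H2. lra. }
  assert (Hsb : /2 <= Cmod s <= 3/2).
  { assert (H0 := Cmod_ge_0 s). split.
    - destruct (Rlt_or_le (Cmod s) (/2)) as [H|H]; auto.
      assert (Cmod s ^ n <= Cmod s) by (apply pow_le_self; auto; lra). lra.
    - destruct (Rle_or_lt (Cmod s) (3/2)) as [H|H]; auto.
      assert (Cmod s <= Cmod s ^ n) by (apply pow_ge_self; auto; lra). lra. }
  assert (Hball : forall x, Cmod (x - s)%C < rho -> /4 <= Cmod x <= 2).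
  { intros x Hx. assert (H1 := Cmod_sub_lower s (x - s)%C). assert (H2 := Cmod_triangle s (x - s)%C).
    replace (s + (x - s))%C with x in H1, H2 by ring. split; lra. }
  destruct (core_newton (fun x => x ^ n - 1)%C (fun x => RtoC (INR n) * x ^ (pred n))%C (fun _ => 0%C)
              s rho M K) as (L & _ & HL0 & HL1 & _); auto.
  - intros x y Hx Hy. destruct (Hball x Hx) as [_ Hx2]. destruct (Hball y Hy) as [_ Hy2].
    assert (Hp := ptaylor x y 2 n ltac:(lra) Hx2 Hy2).
    replace (y ^ n - 1 - (x ^ n - 1) - RtoC (INR n) * x ^ pred n * (y - x) - 0 * Cconj (y - x))%C
      with (y ^ n - x ^ n - RtoC (INR n) * x ^ pred n * (y - x))%C by ring.
    unfold K. assert (0 <= Cmod (y ^ n - x ^ n - RtoC (INR n) * x ^ pred n * (y - x))%C) by apply Cmod_ge_0.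
    replace (2 ^ 2) with 4 in Hp by ring. lra.
  - intros x Hx. destruct (Hball x Hx) as [Hx1 _].
    rewrite Cmod_0, Rminus_0_r, Cmod_mult, Cmod_R, Cmod_pow.
    rewrite (Rabs_pos_eq (INR n)) by apply pos_INR.
    rewrite Rabs_pos_eq. 2:{ apply Rmult_le_pos. apply pos_INR. apply pow_le, Cmod_ge_0. }
    unfold M. rewrite <- pow_inv.
    assert (H1 : 1 <= INR n) by (apply (le_INR 1); auto).
    assert (H2 : (/4) ^ n <= (/4) ^ pred n).
    { destruct n as [|k]; [lia|]. simpl. assert (0 < (/4)^k) by (apply pow_lt; lra). nra. }
    assert (H3 : (/4) ^ pred n <= Cmod x ^ pred n) by (apply pow_incr; lra).
    assert (0 <= (/4)^n) by (apply pow_le; lra). nra.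
  - cbv beta. assert (Hq : 2 * (M * (rho / (4 * M))) = rho / 2) by (field; lra). nra.
  - assert (0 <= M * K) by nra.
    apply Rle_lt_trans with (2 * (/ (4 * M * K + 1)) * M * K).
    { replace (2 * rho * M * K) with (2 * (M * K) * rho) by ring. replace (2 * / (4 * M * K + 1) * M * K) with (2 * (M * K) * / (4 * M * K + 1)) by ring. apply Rmult_le_compat_l; lra. }
    apply Rmult_lt_reg_r with (4 * M * K + 1). nra.
    replace (2 * / (4 * M * K + 1) * M * K * (4 * M * K + 1)) with (2 * M * K) by (field; nra). nra.
  - exists L. split.
    + replace (L ^ n)%C with (L ^ n - 1 + 1)%C by ring. rewrite HL0. ring.
    + replace (s - L)%C with (- (L - s))%C by ring. rewrite Cmod_opp.
      assert (2 * (M * Cmod (s ^ n - 1)%C) <= rho / 2).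
      { apply Rle_trans with (2 * (M * (rho / (4 * M)))). nra. right. field. lra. }
      lra.
Qed.


Definition cis (t : R) : C := (cos t, sin t).

Lemma cis_pow (t : R) (k : nat) : (cis t ^ k)%C = cis (INR k * t).
Proof.
  induction k as [|k IH].
  - simpl. unfold cis. rewrite Rmult_0_l, cos_0, sin_0. reflexivity.
  - rewrite Cpow_S, IH. rewrite S_INR. unfold cis, Cmult; simpl.
    replace ((INR k + 1) * t) with (t + INR k * t) by ring.
    rewrite cos_plus, sin_plus. f_equal; ring.
Qed.

Lemma Cmod_cis (t : R) : Cmod (cis t) = 1.
Proof.
  unfold Cmod, cis; simpl. rewrite !Rmult_1_r.
  replace (cos t * cos t + sin t * sin t) with 1. apply sqrt_1.
  rewrite <- (sin2_cos2 t). unfold Rsqr. ring.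
Qed.

Lemma polar1 (z : C) : Cmod z = 1 -> exists t, 0 <= t < 2 * PI /\ z = cis t.
Proof.
  intros H. assert (H2 := Cmod2_alt z). rewrite H in H2.
  destruct z as [x y]. simpl in H2. unfold Re, Im in H2; simpl in H2.
  assert (Hx : -1 <= x <= 1) by nra.
  assert (Hs : sqrt (1 - x²) = Rabs y).
  { rewrite <- sqrt_Rsqr_abs. f_equal. unfold Rsqr. nra. }
  assert (HPI := PI_RGT_0).
  destruct (Rle_or_lt 0 y) as [Hy|Hy].
  - exists (acos x). assert (Hb := acos_bound x). split. lra.
    unfold cis. rewrite cos_acos by auto. rewrite sin_acos by auto. rewrite Hs, Rabs_pos_eq; auto.
  - assert (Hx' : -1 < x < 1).
    { split; destruct (Req_dec x (-1)); destruct (Req_dec x 1); subst; try nra. }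
    assert (Hb := acos_bound_lt x Hx').
    exists (2 * PI - acos x). split. lra.
    unfold cis. rewrite cos_minus, sin_minus, cos_2PI, sin_2PI.
    rewrite cos_acos by lra. rewrite sin_acos by lra. rewrite Hs, Rabs_left by auto.
    f_equal; ring.
Qed.

Lemma polar (z : C) : z <> 0%C -> exists t, z = (RtoC (Cmod z) * cis t)%C.
Proof.
  intros Hz. assert (Hm : 0 < Cmod z) by (apply Cmod_gt_0; auto).
  destruct (polar1 (z / RtoC (Cmod z))%C) as [t [_ Ht]].
  { assert (Hne : RtoC (Cmod z) <> 0%C) by (intro E; injection E; lra).
    rewrite Cmod_div by auto. rewrite Cmod_R, Rabs_pos_eq by lra. field. lra. }
  exists t. rewrite <- Ht. field. intro E. injection E. lra.
Qed.

Lemma exp_pow (a : R) (k : nat) : exp a ^ k = exp (INR k * a).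
Proof.
  induction k as [|k IH]. simpl. rewrite Rmult_0_l, exp_0; auto.
  simpl pow. rewrite IH, S_INR, <- exp_plus. f_equal. ring.
Qed.

Lemma root_exists (W : C) (n : nat) : (1 <= n)%nat -> W <> 0%C -> exists z, (z ^ n)%C = W.
Proof.
  intros Hn HW. destruct (polar W HW) as [t Ht].
  assert (Hm : 0 < Cmod W) by (apply Cmod_gt_0; auto).
  assert (HnR : 0 < INR n) by (apply lt_0_INR; lia).
  exists (RtoC (exp (ln (Cmod W) / INR n)) * cis (t / INR n))%C.
  rewrite Cpow_mult_l, cis_pow, <- RtoC_pow, exp_pow.
  replace (INR n * (ln (Cmod W) / INR n)) with (ln (Cmod W)) by (field; lra).
  replace (INR n * (t / INR n)) with t by (field; lra).
  rewrite exp_ln by auto. auto.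
Qed.

Lemma cos_not1 (x : R) : 0 < x < 2 * PI -> cos x <> 1.
Proof.
  intros Hx E. replace x with (2 * (x / 2)) in E by field.
  rewrite cos_2a_sin in E. assert (sin (x/2) > 0) by (apply sin_gt_0; lra). nra.
Qed.

Definition omega (n j : nat) : C := cis (2 * PI * INR j / INR n).

Lemma omega_pow (n j : nat) : (1 <= n)%nat -> (omega n j ^ n)%C = 1%C.
Proof.
  intros Hn. unfold omega. rewrite cis_pow.
  assert (HnR : 0 < INR n) by (apply lt_0_INR; lia).
  replace (INR n * (2 * PI * INR j / INR n)) with (0 + 2 * INR j * PI) by (field; lra).
  unfold cis. rewrite cos_period, sin_period, cos_0, sin_0. reflexivity.
Qed.

Lemma omega_inj (n j k : nat) : (j < n)%nat -> (k < n)%nat -> omega n j = omega n k -> j = k.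
Proof.
  intros Hj Hk E.
  assert (HnR : 0 < INR n) by (apply lt_0_INR; lia).
  assert (HPI := PI_RGT_0).
  unfold omega, cis in E. injection E as E1 E2.
  destruct (Nat.lt_trichotomy j k) as [H|[H|H]]; auto; exfalso.
  - apply (cos_not1 (2 * PI * INR k / INR n - 2 * PI * INR j / INR n)).
    + assert (INR j < INR k) by (apply lt_INR; auto). assert (INR k < INR n) by (apply lt_INR; auto).
      split.
      * apply Rmult_lt_reg_r with (INR n); auto. field_simplify; try lra. nra.
      * apply Rmult_lt_reg_r with (INR n); auto. field_simplify; try lra.
        assert (0 <= INR j) by apply pos_INR. nra.
    + rewrite cos_minus, E1, E2. rewrite <- (sin2_cos2 (2 * PI * INR k / INR n)). unfold Rsqr. ring.
  - apply (cos_not1 (2 * PI * INR j / INR n - 2 * PI * INR k / INR n)).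
    + assert (INR k < INR j) by (apply lt_INR; auto). assert (INR j < INR n) by (apply lt_INR; auto).
      split.
      * apply Rmult_lt_reg_r with (INR n); auto. field_simplify; try lra. nra.
      * apply Rmult_lt_reg_r with (INR n); auto. field_simplify; try lra.
        assert (0 <= INR k) by apply pos_INR. nra.
    + rewrite cos_minus, E1, E2. rewrite <- (sin2_cos2 (2 * PI * INR k / INR n)). unfold Rsqr. ring.
Qed.

Lemma nat_floor (x : R) : 0 <= x -> exists j : nat, INR j <= x < INR j + 1.
Proof.
  intros Hx. destruct (archimed x) as [H1 H2].
  assert (Hu : (1 <= up x)%Z).
  { assert (H0 : (0 < up x)%Z) by (apply lt_IZR; simpl; lra). lia. }
  exists (Z.to_nat (up x - 1)).
  rewrite INR_IZR_INZ, Z2Nat.id by lia. rewrite minus_IZR. simpl. lra.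
Qed.

Lemma unity_classify (n : nat) (u : C) : (1 <= n)%nat -> (u ^ n)%C = 1%C ->
  exists j, (j < n)%nat /\ u = omega n j.
Proof.
  intros Hn Hu. assert (Hm := unity_abs u n Hn Hu).
  destruct (polar1 u Hm) as [t [Ht Hut]].
  assert (HnR : 0 < INR n) by (apply lt_0_INR; lia).
  assert (HPI := PI_RGT_0).
  rewrite Hut, cis_pow in Hu. unfold cis in Hu. injection Hu as Hc Hs.
  destruct (nat_floor (INR n * t / (2 * PI))) as [j [Hj1 Hj2]].
  { apply Rmult_le_pos. nra. left. apply Rinv_0_lt_compat. lra. }
  assert (Hjn : (j < n)%nat).
  { apply INR_lt. apply Rle_lt_trans with (INR n * t / (2 * PI)); auto.
    apply Rmult_lt_reg_r with (2 * PI). lra. field_simplify; try lra. nra. }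
  set (r := INR n * t - 2 * PI * INR j).
  assert (Hr : 0 <= r < 2 * PI).
  { unfold r. split.
    - apply Rmult_le_compat_r with (r := 2 * PI) in Hj1; [|lra].
      field_simplify in Hj1; lra.
    - apply Rmult_lt_compat_r with (r := 2 * PI) in Hj2; [|lra].
      field_simplify in Hj2; lra. }
  assert (Hcr : cos r = 1).
  { rewrite <- Hc. replace (INR n * t) with (r + 2 * INR j * PI) by (unfold r; ring).
    rewrite cos_period. auto. }
  assert (Hr0 : r = 0).
  { destruct (Req_dec r 0) as [|Hne]; auto. exfalso. apply (cos_not1 r); auto. lra. }
  exists j. split; auto. rewrite Hut. unfold omega. f_equal.
  unfold r in Hr0. apply Rmult_eq_reg_l with (INR n). 2: lra.
  field_simplify; lra.
Qed.


Definition CS (u : nat -> C) : C :=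
  match excluded_middle_informative (ex_series (K := C_AbsRing) (V := C_NormedModule) u) with
  | left H => proj1_sig (constructive_indefinite_description _ H)
  | right _ => 0%C
  end.

Lemma CS_correct (u : nat -> C) : ex_series (K := C_AbsRing) (V := C_NormedModule) u ->
  is_series (V := C_NormedModule) u (CS u).
Proof.
  intros H. unfold CS. destruct excluded_middle_informative as [H'|H']; [|contradiction].
  apply (proj2_sig (constructive_indefinite_description _ H')).
Qed.

Lemma series_unique (u : nat -> C) (l1 l2 : C) :
  is_series (V := C_NormedModule) u l1 -> is_series (V := C_NormedModule) u l2 -> l1 = l2.
Proof.
  intros H1 H2. apply (filterlim_locally_unique (sum_n u) l1 l2 H1 H2).
Qed.

Lemma sq_le_3pow (m : nat) : INR m ^ 2 + 1 <= 3 ^ m.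
Proof.
  induction m as [|m IH]. simpl. lra.
  rewrite S_INR. simpl pow in *. assert (0 <= INR m) by apply pos_INR. nra.
Qed.

Lemma geom_partial (u : nat -> C) (A q : R) : 0 <= A -> 0 <= q < 1 ->
  (forall m, Cmod (u m) <= A * q ^ m) ->
  forall N, Cmod (sum_n u N) <= A * (1 - q ^ S N) / (1 - q).
Proof.
  intros HA Hq Hu N. induction N as [|N IH].
  - rewrite sum_O. eapply Rle_trans; [apply Hu|]. right. simpl. field. lra.
  - rewrite sum_Sn. change (plus ?a ?b) with (Cplus a b).
    eapply Rle_trans; [apply Cmod_triangle|].
    eapply Rle_trans; [apply Rplus_le_compat; [apply IH|apply Hu]|].
    right. simpl. field. lra.
Qed.

Lemma series_geom_bound (u : nat -> C) (l : C) (A q : R) : 0 <= A -> 0 <= q < 1 ->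
  is_series (V := C_NormedModule) u l -> (forall m, Cmod (u m) <= A * q ^ m) ->
  Cmod l <= A / (1 - q).
Proof.
  intros HA Hq Hs Hu. apply (lim_norm_le (sum_n u)); auto.
  intros N. eapply Rle_trans; [apply (geom_partial u A q HA Hq Hu)|].
  assert (0 < q ^ S N \/ q ^ S N = 0).
  { destruct (Req_dec q 0). subst. right. simpl. ring. left. apply pow_lt. lra. }
  assert (0 <= q ^ S N) by (apply pow_le; lra).
  unfold Rdiv. apply Rmult_le_compat_r. left. apply Rinv_0_lt_compat. lra. nra.
Qed.

Lemma series_geom_ex (u : nat -> C) (A q : R) : 0 <= A -> 0 <= q < 1 ->
  (forall m, Cmod (u m) <= A * q ^ m) -> ex_series (K := C_AbsRing) (V := C_NormedModule) u.
Proof.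
  intros HA Hq Hu.
  assert (H : ex_series (K := C_AbsRing) (V := C_CompleteNormedModule) u).
  { apply ex_series_le with (b := fun j => A * q ^ j). intros j. apply Hu.
    exists (A * / (1 - q)).
    apply (is_series_scal_l (K := R_AbsRing) (V := R_NormedModule) A (fun j => q ^ j)).
    apply is_series_geom. rewrite Rabs_pos_eq; lra. }
  exact H.
Qed.

Lemma is_series_at0 (c : nat -> C) : is_series (V := C_NormedModule) (fun m => c m * 0 ^ m)%C (c 0%nat).
Proof.
  assert (Hs : forall N, sum_n (fun m => c m * 0 ^ m)%C N = c 0%nat).
  { induction N. rewrite sum_O. simpl. match goal with |- ?a = ?b => change (@eq C a b) end. ring.
    rewrite sum_Sn, IHN. change (plus ?a ?b) with (Cplus a b).
    rewrite Cpow_S. match goal with |- ?a = ?b => change (@eq C a b) end. ring. }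
  unfold is_series. eapply filterlim_ext. intros N. symmetry. apply Hs.
  apply filterlim_const.
Qed.

Lemma pseries_props (c : nat -> C) (r0 Mb : R) : 0 < r0 ->
  (forall m, Cmod (c m) * r0 ^ m <= Mb) ->
  exists (Sf Sf' : C -> C) (D K : R), 0 <= D /\ 0 <= K /\ Sf 0%C = c 0%nat /\
   (forall x, Cmod x <= r0 / 6 -> is_series (V := C_NormedModule) (fun m => c m * x ^ m)%C (Sf x)) /\
   (forall x, Cmod x <= r0 / 6 -> Cmod (Sf' x) <= D) /\
   (forall x y, Cmod x <= r0 / 6 -> Cmod y <= r0 / 6 ->
      Cmod (Sf y - Sf x - Sf' x * (y - x))%C <= K * Cmod (y - x)%C ^ 2).
Proof.
  intros Hr HM.
  assert (HMb : 0 <= Mb) by (specialize (HM 0%nat); simpl in HM; assert (H := Cmod_ge_0 (c 0%nat)); lra).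
  set (R := r0 / 6). assert (HR : 0 < R) by (unfold R; lra).
  assert (Hc : forall m, Cmod (c m) * R ^ m <= Mb * (/6) ^ m).
  { intros m. unfold R. unfold Rdiv. rewrite Rpow_mult_distr.
    specialize (HM m). assert (0 <= (/6)^m) by (apply pow_le; lra). nra. }
  set (Sf := fun x => CS (fun m => c m * x ^ m)%C).
  set (Sf' := fun x => CS (fun m => c m * RtoC (INR m) * x ^ (pred m))%C).
  assert (Hterm : forall x m, Cmod x <= R -> Cmod (c m * x ^ m)%C <= Mb * (/6) ^ m).
  { intros x m Hx. rewrite Cmod_mult, Cmod_pow. eapply Rle_trans; [|apply Hc].
    apply Rmult_le_compat_l. apply Cmod_ge_0. apply pow_incr. split; auto. apply Cmod_ge_0. }
  assert (Hdterm : forall x m, Cmod x <= R ->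
            Cmod (c m * RtoC (INR m) * x ^ (pred m))%C <= Mb / R * (/2) ^ m).
  { intros x m Hx. rewrite !Cmod_mult, Cmod_R, Cmod_pow, Rabs_pos_eq by apply pos_INR.
    destruct m as [|k].
    - simpl. rewrite Rmult_0_r, Rmult_0_l. apply Rmult_le_pos. unfold Rdiv. apply Rmult_le_pos; auto. left; apply Rinv_0_lt_compat; auto. lra.
    - simpl pred. apply Rmult_le_reg_l with R; auto.
      assert (H1 : Cmod x ^ k <= R ^ k) by (apply pow_incr; split; auto; apply Cmod_ge_0).
      assert (H2 := Hc (S k)). assert (H3 := sq_le_3pow (S k)).
      assert (H4 : INR (S k) <= 3 ^ S k) by (assert (1 <= INR (S k)) by (rewrite S_INR; assert (H5 := pos_INR k); lra); nra).
      assert (H6 : 0 <= Cmod (c (S k))) by apply Cmod_ge_0.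
      assert (H7 : 0 <= INR (S k)) by apply pos_INR.
      apply Rle_trans with (Cmod (c (S k)) * INR (S k) * R ^ S k).
      { simpl (R ^ S k). assert (HPk : 0 <= Cmod (c (S k)) * INR (S k)) by nra.
        replace (R * (Cmod (c (S k)) * INR (S k) * Cmod x ^ k)) with ((Cmod (c (S k)) * INR (S k)) * (R * Cmod x ^ k)) by ring.
        replace (Cmod (c (S k)) * INR (S k) * (R * R ^ k)) with ((Cmod (c (S k)) * INR (S k)) * (R * R ^ k)) by ring.
        apply Rmult_le_compat_l; auto. apply Rmult_le_compat_l; lra. }
      apply Rle_trans with (Mb * (/6) ^ S k * INR (S k)).
      { assert (0 <= R ^ S k) by (apply pow_le; lra). nra. }
      replace (R * (Mb / R * (/ 2) ^ S k)) with (Mb * (/2) ^ S k) by (field; lra).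
      replace ((/2) ^ S k) with ((/6) ^ S k * 3 ^ S k).
      2:{ rewrite <- Rpow_mult_distr. f_equal. field. }
      assert (0 <= (/6)^ S k) by (apply pow_le; lra).
      replace (Mb * ((/6)^S k * 3^S k)) with ((Mb * (/6)^S k) * 3^S k) by ring.
      apply Rmult_le_compat_l; [apply Rmult_le_pos; lra|lra]. }
  assert (HS : forall x, Cmod x <= R -> is_series (V := C_NormedModule) (fun m => c m * x ^ m)%C (Sf x)).
  { intros x Hx. apply CS_correct. apply series_geom_ex with Mb (/6); auto. lra. }
  assert (HS' : forall x, Cmod x <= R ->
            is_series (V := C_NormedModule) (fun m => c m * RtoC (INR m) * x ^ (pred m))%C (Sf' x)).
  { intros x Hx. apply CS_correct. apply series_geom_ex with (Mb / R) (/2); auto.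
    unfold Rdiv; apply Rmult_le_pos; auto; left; apply Rinv_0_lt_compat; auto. lra. }
  exists Sf, Sf', (Mb / R * / (1 - /2)), (Mb / R ^ 2 * / (1 - /2)).
  assert (HMR : 0 <= Mb / R) by (unfold Rdiv; apply Rmult_le_pos; auto; left; apply Rinv_0_lt_compat; auto).
  assert (HMR2 : 0 <= Mb / R ^ 2) by (unfold Rdiv; apply Rmult_le_pos; auto; left; apply Rinv_0_lt_compat; nra).
  split. apply Rmult_le_pos; auto; lra.
  split. apply Rmult_le_pos; auto; lra.
  split.
  { apply series_unique with (fun m => c m * 0 ^ m)%C. apply HS. rewrite Cmod_0; lra. apply is_series_at0. }
  split. exact HS.
  split.
  { intros x Hx. apply series_geom_bound with (fun m => c m * RtoC (INR m) * x ^ (pred m))%C; auto. lra. }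
  intros x y Hx Hy.
  assert (Hser : is_series (V := C_NormedModule)
     (fun m => c m * (y ^ m - x ^ m - RtoC (INR m) * x ^ (pred m) * (y - x)))%C
     (Sf y - Sf x - Sf' x * (y - x))%C).
  { assert (H1 := is_series_minus _ _ _ _ (HS y Hy) (HS x Hx)).
    assert (H3 := is_series_scal_l (K := C_AbsRing) (V := C_NormedModule) (y - x)%C _ _ (HS' x Hx)).
    assert (H4 := is_series_minus _ _ _ _ H1 H3).
    replace (Sf y - Sf x - Sf' x * (y - x))%C with (plus (plus (Sf y) (opp (Sf x))) (opp (scal (y - x)%C (Sf' x)))).
    2:{ unfold plus, opp, scal; simpl; repeat change (@mult C_Ring ?a ?b) with (Cmult a b).
        match goal with |- ?a = ?b => change (@eq C a b) end. ring. }
    eapply is_series_ext; [|exact H4]. intros m. simpl.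
    unfold plus, opp, scal; simpl; repeat change (@mult C_Ring ?a ?b) with (Cmult a b).
    match goal with |- ?a = ?b => change (@eq C a b) end. ring. }
  assert (Hd0 := Cmod_ge_0 (y - x)%C).
  apply series_geom_bound with (A := Mb / R ^ 2 * Cmod (y - x)%C ^ 2) (q := /2) in Hser.
  - replace (Mb / R ^ 2 * / (1 - / 2) * Cmod (y - x)%C ^ 2) with (Mb / R ^ 2 * Cmod (y - x)%C ^ 2 / (1 - / 2)) by (field; lra). auto.
  - apply Rmult_le_pos; auto. nra.
  - lra.
  - intros m. rewrite Cmod_mult.
    assert (Hp := ptaylor x y R m HR Hx Hy).
    apply Rmult_le_reg_l with (R ^ 2). nra.
    set (E := Cmod (y ^ m - x ^ m - RtoC (INR m) * x ^ pred m * (y - x))%C) in *.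
    assert (HE : 0 <= E) by apply Cmod_ge_0.
    apply Rle_trans with (Cmod (c m) * (INR m ^ 2 * R ^ m * Cmod (y - x)%C ^ 2)).
    { assert (0 <= Cmod (c m)) by apply Cmod_ge_0. nra. }
    replace (R ^ 2 * (Mb / R ^ 2 * Cmod (y - x)%C ^ 2 * (/ 2) ^ m)) with (Mb * (/2) ^ m * Cmod (y - x)%C ^ 2) by (field; lra).
    assert (H3 := sq_le_3pow m). assert (H6 := Hc m).
    replace ((/2) ^ m) with ((/6) ^ m * 3 ^ m) by (rewrite <- Rpow_mult_distr; f_equal; field).
    assert (0 <= (/6)^m) by (apply pow_le; lra).
    assert (0 <= Cmod (y - x)%C ^ 2) by nra.
    assert (0 <= Cmod (c m) * R ^ m) by (apply Rmult_le_pos; [apply Cmod_ge_0|apply pow_le; lra]).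
    assert (0 <= INR m ^ 2) by (apply pow_le, pos_INR).
    apply Rle_trans with ((Cmod (c m) * R ^ m) * INR m ^ 2 * Cmod (y - x)%C ^ 2). right; ring.
    apply Rmult_le_compat_r; auto.
    apply Rle_trans with (Mb * (/6)^m * INR m ^ 2). apply Rmult_le_compat_r; auto.
    assert (0 <= Mb * (/6)^m) by (apply Rmult_le_pos; auto). nra.
Qed.


Lemma ln_le_sub1 (x : R) : 0 < x -> ln x <= x - 1.
Proof. intros H. assert (H1 := exp_ineq1_le (ln x)). rewrite exp_ln in H1; auto. lra. Qed.

Lemma ln_lt_2sqrt (y : R) : 0 < y -> ln y <= 2 * sqrt y.
Proof.
  intros Hy. assert (Hs : 0 < sqrt y) by (apply sqrt_lt_R0; auto).
  replace y with (sqrt y * sqrt y) at 1 by (apply sqrt_sqrt; lra).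
  rewrite ln_mult by auto. assert (H := ln_le_sub1 (sqrt y) Hs). lra.
Qed.

Lemma tlnt_bound (t : R) : 0 < t <= 1 -> t * Rabs (ln t) <= 2 * sqrt t.
Proof.
  intros Ht. assert (Hl : ln t <= 0).
  { destruct (Req_dec t 1). subst. rewrite ln_1. lra. left. rewrite <- ln_1. apply ln_increasing; lra. }
  rewrite Rabs_left1 by auto. rewrite <- ln_Rinv by lra.
  assert (Hi : 0 < / t) by (apply Rinv_0_lt_compat; lra).
  assert (H := ln_lt_2sqrt (/ t) Hi).
  assert (Hs : 0 < sqrt t) by (apply sqrt_lt_R0; lra).
  rewrite sqrt_inv in H.
  apply Rle_trans with (t * (2 * / sqrt t)). apply Rmult_le_compat_l; lra.
  replace (t * (2 * / sqrt t)) with (2 * (sqrt t * sqrt t) / sqrt t) by (rewrite sqrt_sqrt; [field|]; lra).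
  right. field. lra.
Qed.

Lemma ln1p_bounds (s : R) : -/2 <= s -> s - 2 * s ^ 2 <= ln (1 + s) <= s.
Proof.
  intros Hs. split.
  - assert (H := ln_le_sub1 (/ (1 + s)) ltac:(apply Rinv_0_lt_compat; lra)).
    rewrite ln_Rinv in H by lra.
    assert (s / (1 + s) <= ln (1 + s)).
    { replace (s / (1 + s)) with (- (/ (1 + s) - 1)) by (field; lra). lra. }
    assert (s - 2 * s ^ 2 <= s / (1 + s)).
    { apply Rmult_le_reg_r with (1 + s). lra. unfold Rdiv. rewrite Rmult_assoc, Rinv_l by lra. nra. }
    lra.
  - assert (H := ln_le_sub1 (1 + s) ltac:(lra)). lra.
Qed.

Lemma log_taylor (q : C) : Cmod q <= /4 ->
  Rabs (ln (Cmod (1 + q)%C) - fst q) <= 6 * Cmod q ^ 2.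
Proof.
  intros Hq. destruct q as [q1 q2].
  assert (Hq0 := Cmod_ge_0 (q1, q2)).
  set (Q := Cmod (q1, q2) ^ 2) in *.
  assert (HQ : Q = q1 ^ 2 + q2 ^ 2) by (unfold Q; rewrite Cmod2_alt; reflexivity).
  assert (HQ1 : Q <= / 16) by (unfold Q; nra).
  assert (Hq1 : Rabs q1 <= /4) by (assert (H := Cmod_fst_le (q1, q2)); simpl in H; lra).
  set (s := 2 * q1 + Q).
  assert (Hm : Cmod (1 + (q1, q2))%C = sqrt (1 + s)).
  { assert (Hs' : 1 + s = (1 + q1)^2 + q2^2) by (unfold s; rewrite HQ; ring).
    rewrite Hs'. unfold Cmod. simpl. f_equal. ring. }
  assert (Hs : - / 2 <= s) by (unfold s; assert (0 <= Q) by (unfold Q; nra); apply Rabs_le_between in Hq1; lra).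
  assert (Hln : ln (sqrt (1 + s)) = ln (1 + s) / 2).
  { assert (H1 : 0 < sqrt (1 + s)) by (apply sqrt_lt_R0; lra).
    replace (ln (1 + s)) with (ln (sqrt (1 + s) * sqrt (1 + s))) by (rewrite sqrt_sqrt; auto; lra).
    rewrite ln_mult by auto. field. }
  rewrite Hm, Hln. simpl fst.
  destruct (ln1p_bounds s Hs) as [L1 L2].
  assert (Hs2 : s ^ 2 <= 5 * Q + Q).
  { unfold s. apply Rabs_le_between in Hq1. assert (0 <= Q) by (unfold Q; nra).
    assert (q1 ^ 2 <= Q) by nra.
    assert (H1 : 0 <= (/4 - q1) * Q) by (apply Rmult_le_pos; lra).
    assert (H2 : 0 <= Q * (/16 - Q)) by (apply Rmult_le_pos; lra).
    replace ((2 * q1 + Q) ^ 2) with (4 * q1 ^ 2 + 4 * q1 * Q + Q * Q) by ring. nra. }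
  assert (Hsd : s = 2 * q1 + Q) by reflexivity. clearbody s. apply Rabs_le. split; nra.
Qed.


Lemma Czpow_sub (w : C) (m n : nat) : w <> 0%C ->
  Czpow w (Z.of_nat m - Z.of_nat n) = (w ^ m / w ^ n)%C.
Proof.
  intros Hw. destruct (Z.of_nat m - Z.of_nat n)%Z eqn:E.
  - assert (m = n) by lia. subst. simpl. field. apply Cpow_nz; auto.
  - simpl. assert (Hm : m = (Pos.to_nat p + n)%nat) by lia. subst m.
    rewrite Cpow_add_r. field. apply Cpow_nz; auto.
  - simpl. assert (Hn : n = (Pos.to_nat p + m)%nat) by lia. subst n.
    rewrite Cpow_add_r. field. split; apply Cpow_nz; auto.
Qed.

Lemma laurent_series (a : Z -> C) (n : nat) (w s : C) : w <> 0%C ->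
  is_series (V := C_NormedModule) (laurent_term a n w) s ->
  is_series (V := C_NormedModule) (fun m => a (Z.of_nat m - Z.of_nat n)%Z * w ^ m)%C (w ^ n * s)%C.
Proof.
  intros Hw H. assert (H' := is_series_scal_l (K := C_AbsRing) (V := C_NormedModule) (w ^ n)%C _ _ H).
  eapply is_series_ext; [|exact H']. intros m. unfold laurent_term. rewrite Czpow_sub by auto.
  unfold scal; simpl. repeat change (@mult C_Ring ?a ?b) with (Cmult a b).
  field. apply Cpow_nz; auto.
Qed.

Lemma le_sum_f (u : nat -> R) (m N : nat) : (forall j, 0 <= u j) -> (m <= N)%nat -> u m <= sum_f_R0 u N.
Proof.
  intros Hu HmN. induction N as [|N IH].
  - assert (m = 0%nat) by lia. subst. simpl. lra.
  - destruct (Nat.eq_dec m (S N)) as [E|E].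
    + subst. simpl. assert (0 <= sum_f_R0 u N) by (apply cond_pos_sum; auto). lra.
    + simpl. assert (u m <= sum_f_R0 u N) by (apply IH; lia). specialize (Hu (S N)). lra.
Qed.

Lemma terms_bounded (u : nat -> C) (l : C) : is_series (V := C_NormedModule) u l ->
  exists B, forall m, Cmod (u m) <= B.
Proof.
  intros H. destruct (proj1 (filterlim_C_char (sum_n u) l) H 1 ltac:(lra)) as [N HN].
  exists (2 + sum_f_R0 (fun j => Cmod (u j)) N). intros m.
  assert (Hs : 0 <= sum_f_R0 (fun j => Cmod (u j)) N) by (apply cond_pos_sum; intros; apply Cmod_ge_0).
  destruct (le_lt_dec m N) as [Hm|Hm].
  - assert (Cmod (u m) <= sum_f_R0 (fun j => Cmod (u j)) N) by (apply (le_sum_f (fun j => Cmod (u j))); auto; intros; apply Cmod_ge_0).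
    lra.
  - destruct m as [|k]; [lia|].
    assert (E : u (S k) = (sum_n u (S k) - l - (sum_n u k - l))%C).
    { rewrite sum_Sn. unfold plus; simpl. match goal with |- ?a = ?b => change (@eq C a b) end. ring. }
    rewrite E. eapply Rle_trans; [apply Cmod_triangle|]. rewrite Cmod_opp.
    assert (H1 := HN (S k) ltac:(lia)). assert (H2 := HN k ltac:(lia)). lra.
Qed.

Lemma G_taylor (P P' : C -> C) (an : C) (n : nat) (LP DP KP s : R) (x y : C) :
  0 < s <= 1 -> s / 2 <= Cmod x -> s / 2 <= Cmod y -> Cmod y <= 2 * s -> Cmod (y - x)%C <= 1 ->
  0 <= LP -> 0 <= DP -> 0 <= KP ->
  Cmod (P y - an)%C <= LP * Cmod y -> Cmod (P' x) <= DP ->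
  Cmod (P y - P x - P' x * (y - x))%C <= KP * Cmod (y - x)%C ^ 2 ->
  Cmod ((P y - an) / y ^ n - (P x - an) / x ^ n
        - (- RtoC (INR n) * (P x - an) / x ^ S n + P' x / x ^ n) * (y - x))%C * s ^ (n + 2)
  <= ((INR n ^ 2 + INR n) * 2 ^ (n + 3) * LP + INR n * 2 ^ (n + 1) * (DP + KP) + 2 ^ n * KP)
     * Cmod (y - x)%C ^ 2.
Proof.
  intros Hs Hx Hy Hy2 Hh HLP HDP HKP HPa HP' HPt.
  destruct (Cmod_inv_le x (s/2) ltac:(lra) Hx) as [Hx0 Hxi].
  destruct (Cmod_inv_le y (s/2) ltac:(lra) Hy) as [Hy0 Hyi].
  set (h := (y - x)%C) in *.
  set (phr := (/ y ^ n - / x ^ n + RtoC (INR n) * / x ^ S n * h)%C).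
  assert (Hid : ((P y - an) / y ^ n - (P x - an) / x ^ n
        - (- RtoC (INR n) * (P x - an) / x ^ S n + P' x / x ^ n) * h)%C
     = (phr * (P y - an) + (- RtoC (INR n) * / x ^ S n) * h * (P y - P x)
        + / x ^ n * (P y - P x - P' x * h))%C).
  { unfold phr, h. rewrite !Cpow_S. field. repeat split; auto; try (apply Cpow_nz; auto). }
  rewrite Hid.
  assert (Hphr : Cmod phr <= (INR n ^ 2 + INR n) * (/ (s / 2)) ^ (n + 2) * Cmod h ^ 2).
  { unfold phr, h. apply inv_taylor; lra. }
  assert (Hsp : 0 < s ^ n) by (apply pow_lt; lra).
  assert (Hi2 : (/ (s / 2)) ^ (n + 2) * s ^ (n + 2) = 2 ^ (n + 2)).
  { rewrite <- Rpow_mult_distr. replace (/ (s / 2) * s) with 2 by (field; lra). reflexivity. }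
  assert (Hi1 : Cmod (/ x ^ S n)%C * s ^ S n <= 2 ^ S n).
  { rewrite <- Cpow_inv, Cmod_pow by auto.
    replace (2 ^ S n) with ((/ (s / 2)) ^ S n * s ^ S n).
    2:{ rewrite <- Rpow_mult_distr. replace (/ (s / 2) * s) with 2 by (field; lra). reflexivity. }
    apply Rmult_le_compat_r. apply pow_le; lra. apply pow_incr. split; [apply Cmod_ge_0|auto]. }
  assert (Hi0 : Cmod (/ x ^ n)%C * s ^ n <= 2 ^ n).
  { rewrite <- Cpow_inv, Cmod_pow by auto.
    replace (2 ^ n) with ((/ (s / 2)) ^ n * s ^ n).
    2:{ rewrite <- Rpow_mult_distr. replace (/ (s / 2) * s) with 2 by (field; lra). reflexivity. }
    apply Rmult_le_compat_r. apply pow_le; lra. apply pow_incr. split; [apply Cmod_ge_0|auto]. }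
  assert (HPyx : Cmod (P y - P x)%C <= (DP + KP) * Cmod h).
  { replace (P y - P x)%C with ((P y - P x - P' x * h) + P' x * h)%C by ring.
    eapply Rle_trans; [apply Cmod_triangle|]. rewrite Cmod_mult.
    assert (H0 := Cmod_ge_0 h). assert (Cmod h ^ 2 <= Cmod h) by (simpl; nra).
    assert (H1 : Cmod (P' x) * Cmod h <= DP * Cmod h) by (apply Rmult_le_compat_r; auto).
    assert (KP * Cmod h ^ 2 <= KP * Cmod h) by (apply Rmult_le_compat_l; auto). lra. }
  assert (Hh0 := Cmod_ge_0 h).
  assert (Hsn2 : s ^ (n + 2) = s ^ n * s * s) by (rewrite pow_add; simpl; ring).
  assert (HsS : s ^ (n + 2) = s ^ S n * s) by (rewrite pow_add; simpl; ring).
  eapply Rle_trans. apply Rmult_le_compat_r. apply pow_le; lra.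
  eapply Rle_trans; [apply Cmod_triangle|]. apply Rplus_le_compat_r. apply Cmod_triangle.
  rewrite !Cmod_mult, Cmod_opp, Cmod_R, Rabs_pos_eq by apply pos_INR.
  set (i1 := Cmod (/ x ^ S n)%C) in *. set (i0 := Cmod (/ x ^ n)%C) in *.
  assert (Hi1p : 0 <= i1) by apply Cmod_ge_0. assert (Hi0p : 0 <= i0) by apply Cmod_ge_0.
  assert (HnR := pos_INR n).
  assert (T1 : Cmod phr * Cmod (P y - an)%C * s ^ (n + 2) <= (INR n ^ 2 + INR n) * 2 ^ (n + 3) * LP * Cmod h ^ 2).
  { assert (Hpp := Cmod_ge_0 phr). assert (Hpa := Cmod_ge_0 (P y - an)%C).
    assert (HA : Cmod phr * s ^ (n + 2) <= (INR n ^ 2 + INR n) * 2 ^ (n + 2) * Cmod h ^ 2).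
    { rewrite <- Hi2. assert (0 < s ^ (n + 2)) by (apply pow_lt; lra).
      apply Rle_trans with ((INR n ^ 2 + INR n) * (/ (s / 2)) ^ (n + 2) * Cmod h ^ 2 * s ^ (n + 2)).
      apply Rmult_le_compat_r; lra. right; ring. }
    assert (HB : Cmod (P y - an)%C <= 2 * LP) by nra.
    replace (2 ^ (n + 3)) with (2 ^ (n + 2) * 2) by (rewrite !pow_add; simpl; ring).
    assert (0 <= (INR n ^ 2 + INR n) * 2 ^ (n + 2) * Cmod h ^ 2).
    { apply Rmult_le_pos. apply Rmult_le_pos. nra. apply pow_le; lra. nra. }
    apply Rle_trans with ((Cmod phr * s ^ (n + 2)) * Cmod (P y - an)%C). right; ring.
    apply Rle_trans with (((INR n ^ 2 + INR n) * 2 ^ (n + 2) * Cmod h ^ 2) * (2 * LP)).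
    apply Rmult_le_compat; auto. apply Rmult_le_pos; [auto|apply pow_le; lra].
    right; ring. }
  assert (T2 : INR n * i1 * Cmod h * Cmod (P y - P x)%C * s ^ (n + 2) <= INR n * 2 ^ (n + 1) * (DP + KP) * Cmod h ^ 2).
  { rewrite HsS. replace (n + 1)%nat with (S n) by lia.
    assert (Hs1 : i1 * s ^ S n * s <= 2 ^ S n).
    { assert (i1 * s ^ S n * s <= i1 * s ^ S n). { assert (0 <= i1 * s ^ S n) by (apply Rmult_le_pos; auto; apply pow_le; lra). nra. } lra. }
    assert (Hq := Cmod_ge_0 (P y - P x)%C).
    apply Rle_trans with (INR n * (i1 * s ^ S n * s) * (Cmod h * Cmod (P y - P x)%C)). right; ring.
    apply Rle_trans with (INR n * 2 ^ S n * (Cmod h * ((DP + KP) * Cmod h))).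
    apply Rmult_le_compat. apply Rmult_le_pos; auto. apply Rmult_le_pos; [apply Rmult_le_pos; auto; apply pow_le; lra|lra].
    apply Rmult_le_pos; auto. apply Rmult_le_compat_l; auto. apply Rmult_le_compat_l; auto.
    right. simpl. ring. }
  assert (T3 : i0 * Cmod (P y - P x - P' x * h)%C * s ^ (n + 2) <= 2 ^ n * KP * Cmod h ^ 2).
  { rewrite Hsn2. assert (Hq := Cmod_ge_0 (P y - P x - P' x * h)%C).
    assert (Hss : s * s <= 1) by nra.
    apply Rle_trans with ((i0 * s ^ n) * Cmod (P y - P x - P' x * h)%C * (s * s)). right; ring.
    apply Rle_trans with (2 ^ n * (KP * Cmod h ^ 2) * 1).
    apply Rmult_le_compat. apply Rmult_le_pos; auto. apply Rmult_le_pos; auto. apply pow_le; lra. nra.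
    apply Rmult_le_compat; auto. apply Rmult_le_pos; auto; apply pow_le; lra. auto. right; ring. }
  lra.
Qed.

Lemma Cconj_nz (z : C) : z <> 0%C -> Cconj z <> 0%C.
Proof. intros H E. apply H. rewrite <- (Cconj_conj z), E. apply injective_projections; simpl; ring. Qed.

Lemma log_part (A x y : C) (s : R) : 0 < s -> s / 2 <= Cmod x -> Cmod (y - x)%C <= s / 8 ->
  Cmod (RtoC 2 * A * RtoC (ln (Cmod y)) - RtoC 2 * A * RtoC (ln (Cmod x))
        - A / x * (y - x) - A / Cconj x * Cconj (y - x))%C * s ^ 2
  <= 48 * Cmod A * Cmod (y - x)%C ^ 2.
Proof.
  intros Hs Hx Hh.
  destruct (Cmod_inv_le x (s/2) ltac:(lra) Hx) as [Hx0 Hxi].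
  set (q := ((y - x) / x)%C).
  assert (Hq : Cmod q * Cmod x = Cmod (y - x)%C).
  { unfold q. rewrite Cmod_div by auto. field. apply Cmod_gt_0 in Hx0. lra. }
  assert (Hxp : 0 < Cmod x) by lra.
  assert (Hq4 : Cmod q <= / 4).
  { apply Rmult_le_reg_r with (Cmod x); auto. rewrite Hq. lra. }
  assert (Hy : y = (x * (1 + q))%C) by (unfold q; field; auto).
  assert (H1q : 0 < Cmod (1 + q)%C).
  { assert (H := Cmod_sub_lower 1%C q). rewrite Cmod_1 in H. lra. }
  assert (Hln : ln (Cmod y) = ln (Cmod x) + ln (Cmod (1 + q)%C)).
  { rewrite Hy, Cmod_mult, ln_mult; auto. }
  assert (Hqc : (q + Cconj q)%C = RtoC (2 * fst q)).
  { destruct q as [q1 q2]. apply injective_projections; simpl; ring. }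
  assert (Hid : (RtoC 2 * A * RtoC (ln (Cmod y)) - RtoC 2 * A * RtoC (ln (Cmod x))
        - A / x * (y - x) - A / Cconj x * Cconj (y - x))%C
        = (RtoC 2 * A * RtoC (ln (Cmod (1 + q)%C) - fst q))%C).
  { rewrite Hln. replace (y - x)%C with (x * q)%C by (unfold q; field; auto).
    rewrite Cmult_conj. rewrite !RtoC_plus, RtoC_minus.
    assert (Hcx : Cconj x <> 0%C) by (apply Cconj_nz; auto).
    transitivity (RtoC 2 * A * RtoC (ln (Cmod (1 + q)%C)) - A * (q + Cconj q))%C.
    field. split; auto.
    rewrite Hqc, RtoC_mult. ring. }
  rewrite Hid. rewrite !Cmod_mult, !Cmod_R. rewrite (Rabs_pos_eq 2) by lra.
  assert (Hl := log_taylor q Hq4).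
  assert (HA := Cmod_ge_0 A).
  assert (Hqs : Cmod q ^ 2 * s ^ 2 <= 4 * Cmod (y - x)%C ^ 2).
  { rewrite <- Hq. assert (0 <= Cmod q) by apply Cmod_ge_0.
    assert (Hsx : s ^ 2 <= 4 * Cmod x ^ 2) by nra.
    apply Rle_trans with (Cmod q ^ 2 * (4 * Cmod x ^ 2)). apply Rmult_le_compat_l; nra.
    right; ring. }
  apply Rle_trans with (2 * Cmod A * (6 * Cmod q ^ 2) * s ^ 2).
  { apply Rmult_le_compat_r. nra. apply Rmult_le_compat_l. nra. auto. }
  nra.
Qed.


Lemma pow_lt_inv (a b : R) (n : nat) : 0 <= a -> 0 <= b -> a ^ n < b ^ n -> a < b.
Proof.
  intros Ha Hb H. destruct (Rlt_or_le a b) as [|Hba]; auto.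
  assert (b ^ n <= a ^ n) by (apply pow_incr; lra). lra.
Qed.

Lemma pow_lt_strict (a b : R) (n : nat) : (1 <= n)%nat -> 0 <= a < b -> a ^ n < b ^ n.
Proof.
  intros Hn Hab. destruct n as [|k]; [lia|]. simpl.
  assert (a ^ k <= b ^ k) by (apply pow_incr; lra).
  assert (0 < b ^ k) by (apply pow_lt; lra). assert (0 <= a ^ k) by (apply pow_le; lra). nra.
Qed.

Lemma pow_inj_nonneg (a b : R) (n : nat) : (1 <= n)%nat -> 0 <= a -> 0 <= b -> a ^ n = b ^ n -> a = b.
Proof.
  intros Hn Ha Hb H. destruct (Rtotal_order a b) as [Hl|[He|Hl]]; auto.
  - assert (a ^ n < b ^ n) by (apply pow_lt_strict; auto; lra). lra.
  - assert (b ^ n < a ^ n) by (apply pow_lt_strict; auto; lra). lra.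
Qed.

Lemma W_identity (a b c : C) :
  (Cmod a ^ 2 - Cmod b ^ 2) <> 0 -> (Cconj a * c - Cconj b * Cconj c)%C <> 0%C ->
  (a * / (RtoC (Cmod a ^ 2 - Cmod b ^ 2) / (Cconj a * c - Cconj b * Cconj c))
   + Cconj b * / Cconj (RtoC (Cmod a ^ 2 - Cmod b ^ 2) / (Cconj a * c - Cconj b * Cconj c)))%C = c.
Proof.
  intros HD Hden.
  set (den := (Cconj a * c - Cconj b * Cconj c)%C) in *.
  set (D := Cmod a ^ 2 - Cmod b ^ 2) in *.
  assert (HD' : RtoC D <> 0%C) by (intro E; injection E; auto).
  assert (Hcd : Cconj den <> 0%C) by (intro E; apply Hden; rewrite <- (Cconj_conj den), E; apply injective_projections; simpl; ring).
  rewrite Cdiv_conj by auto.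
  replace (Cconj (RtoC D)) with (RtoC D) by (apply injective_projections; simpl; ring).
  assert (Hnum : (a * den + Cconj b * Cconj den)%C = (RtoC D * c)%C).
  { unfold den, D. rewrite Cminus_conj, !Cmult_conj, !Cconj_conj.
    rewrite RtoC_minus, !Cmod2_conj. ring. }
  transitivity ((a * den + Cconj b * Cconj den) / RtoC D)%C.
  field. auto.
  rewrite Hnum. field. auto.
Qed.

Lemma Cconj_RtoC (x : R) : Cconj (RtoC x) = RtoC x.
Proof. apply injective_projections; simpl; ring. Qed.

Lemma Cconj_neq0 (z : C) : z <> 0%C -> Cconj z <> 0%C.
Proof. intros H E. apply H. rewrite <- (Cconj_conj z), E. apply injective_projections; simpl; ring. Qed.

Lemma HT_identity (an bn : C) (nR : R) (n : nat) (E e1 e2 : C -> C) (u v fu fv eta k0 : C) :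
  u <> 0%C -> v <> 0%C ->
  fu = (an / u ^ n + Cconj bn / (Cconj u) ^ n + k0 + E u)%C ->
  fv = (an / v ^ n + Cconj bn / (Cconj v) ^ n + k0 + E v)%C ->
  ((fv - eta) - (fu - eta) - (- RtoC nR * an / u ^ S n + e1 u) * (v - u)
     - (- RtoC nR * Cconj bn / (Cconj u) ^ S n + e2 u) * Cconj (v - u))%C
  = (an * (/ v ^ n - / u ^ n + RtoC nR * / u ^ S n * (v - u))
     + Cconj bn * Cconj (/ v ^ n - / u ^ n + RtoC nR * / u ^ S n * (v - u))
     + (E v - E u - e1 u * (v - u) - e2 u * Cconj (v - u)))%C.
Proof.
  intros Hu Hv -> ->.
  assert (Hun : (u ^ n)%C <> 0%C) by (apply Cpow_nz; auto).
  assert (Hvn : (v ^ n)%C <> 0%C) by (apply Cpow_nz; auto).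
  assert (Hun1 : (u ^ S n)%C <> 0%C) by (apply Cpow_nz; auto).
  assert (Hcu : Cconj u <> 0%C) by (apply Cconj_neq0; auto).
  assert (Hcv : Cconj v <> 0%C) by (apply Cconj_neq0; auto).
  assert (Hcun : (Cconj u ^ n)%C <> 0%C) by (apply Cpow_nz; auto).
  assert (Hcvn : (Cconj v ^ n)%C <> 0%C) by (apply Cpow_nz; auto).
  rewrite Cplus_conj, !Cminus_conj, !Cmult_conj, Cconj_RtoC.
  rewrite !Cinv_conj by auto. rewrite !Cpow_conj.
  rewrite !Cminus_conj. rewrite !Cpow_S.
  set (un := (u ^ n)%C) in *. set (vn := (v ^ n)%C) in *.
  set (cun := (Cconj u ^ n)%C) in *. set (cvn := (Cconj v ^ n)%C) in *.
  field. repeat split; auto.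
Qed.

Lemma Cpow0 (n : nat) : (1 <= n)%nat -> (0 ^ n)%C = 0%C.
Proof. intros Hn. destruct n; [lia|]. rewrite Cpow_S. ring. Qed.

Section Model.
Variables (z0 : C) (f : C -> C) (n : nat) (an bn k0 : C) (E e1 e2 : C -> C) (rs C0 C1 C2 : R).
Hypothesis Hn : (1 <= n)%nat.
Hypothesis Hab : Cmod an <> Cmod bn.
Hypothesis Hrs : 0 < rs <= 1.
Hypothesis HC0 : 0 <= C0.
Hypothesis HC1 : 0 <= C1.
Hypothesis HC2 : 0 <= C2.
Hypothesis HH0 : forall z, 0 < Cmod (z - z0)%C <= rs ->
  f z = (an / (z - z0) ^ n + Cconj bn / (Cconj (z - z0)) ^ n + k0 + E (z - z0))%C.
Hypothesis HH1 : forall w, 0 < Cmod w <= rs -> Cmod (E w) * Cmod w ^ n <= C0 * sqrt (Cmod w).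
Hypothesis HH2 : forall w, 0 < Cmod w <= rs ->
  Cmod (e1 w) * Cmod w ^ S n <= C1 * sqrt (Cmod w) /\ Cmod (e2 w) * Cmod w ^ S n <= C1 * sqrt (Cmod w).
Hypothesis HH3 : forall s x y, 0 < s -> 2 * s <= rs -> s / 2 <= Cmod x <= 2 * s -> s / 2 <= Cmod y <= 2 * s ->
  Cmod (y - x)%C <= s / 8 ->
  Cmod (E y - E x - e1 x * (y - x) - e2 x * Cconj (y - x))%C * s ^ (n + 2) <= C2 * Cmod (y - x)%C ^ 2.

Let nR := INR n.
Let dl := Rabs (Cmod an - Cmod bn).
Let Sg := Cmod an + Cmod bn.
Let Kl := Sg * (nR ^ 2 + nR) * 2 ^ (n + 2).
Let Qc := 4 * 2 ^ (n + 1) * (Kl + C2) / (nR * dl).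
Let lam := / (Qc + 16 + 2 * nR).

Lemma lam_pos : 0 < lam.
Proof.
  assert (HnR : 1 <= nR) by (apply (le_INR 1); auto).
  assert (Hdl : 0 < dl) by (apply Rabs_pos_lt; lra).
  assert (Ha := Cmod_ge_0 an). assert (Hb := Cmod_ge_0 bn).
  assert (HKl : 0 <= Kl) by (unfold Kl, Sg; apply Rmult_le_pos; [apply Rmult_le_pos; nra|apply pow_le; lra]).
  assert (HQ : 0 <= Qc).
  { unfold Qc. apply Rmult_le_pos. apply Rmult_le_pos. apply Rmult_le_pos. lra. apply pow_le; lra. lra.
    left. apply Rinv_0_lt_compat. nra. }
  unfold lam; apply Rinv_0_lt_compat; lra.
Qed.

Lemma lamh_pos : 0 < lam / 2.
Proof. assert (H := lam_pos). lra. Qed.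

Let eps0 := proj1_sig (constructive_indefinite_description _ (root_near n (lam / 2) Hn lamh_pos)).

Lemma Heps0 : 0 < eps0 /\ forall s, Cmod (s ^ n - 1)%C <= eps0 ->
    exists w, (w ^ n)%C = 1%C /\ Cmod (s - w)%C < lam / 2.
Proof. unfold eps0. apply (proj2_sig (constructive_indefinite_description _ (root_near n (lam / 2) Hn lamh_pos))). Qed.

Let tau := Rmin (Rmin (nR * dl / (8 * (C1 + 1))) (lam * nR * dl / (8 * 2 ^ (n + 1) * (C0 + 1))))
                (dl * Rmin (/2) eps0 / (4 * (C0 + 1))).
Let sst := Rmin (rs / 2) (tau ^ 2).
Let rho := 2 * sst.
Let R0 := Sg / sst ^ n.

Lemma basic_facts :
  1 <= nR /\ 0 < dl /\ 0 < Sg /\ dl <= Sg /\ 0 <= Kl /\ 0 <= Qc /\ 0 < lam /\ lam <= /16 /\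
  2 * nR * lam < 1 /\ lam * Qc < 1 /\ 0 < tau /\ 0 < sst /\ sst <= rs / 2 /\ sqrt sst <= tau /\
  0 < R0.
Proof.
  assert (HnR : 1 <= nR) by (apply (le_INR 1); auto).
  assert (Hdl : 0 < dl) by (apply Rabs_pos_lt; lra).
  assert (Ha := Cmod_ge_0 an). assert (Hb := Cmod_ge_0 bn).
  assert (HSg : 0 < Sg) by (unfold Sg; destruct (Req_dec (Cmod an) 0); lra).
  assert (HdS : dl <= Sg) by (unfold dl, Sg; unfold Rabs; destruct Rcase_abs; lra).
  assert (HKl : 0 <= Kl) by (unfold Kl; apply Rmult_le_pos; [apply Rmult_le_pos; nra|apply pow_le; lra]).
  assert (HQ : 0 <= Qc).
  { unfold Qc. apply Rmult_le_pos. apply Rmult_le_pos. apply Rmult_le_pos. lra. apply pow_le; lra. lra.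
    left. apply Rinv_0_lt_compat. nra. }
  assert (Hl : 0 < lam) by (unfold lam; apply Rinv_0_lt_compat; lra).
  assert (Hl16 : lam <= /16) by (unfold lam; apply Rinv_le_contravar; lra).
  assert (Hl2 : 2 * nR * lam < 1).
  { unfold lam. apply Rmult_lt_reg_r with (Qc + 16 + 2 * nR). lra.
    rewrite Rmult_assoc, Rinv_l by lra. lra. }
  assert (HlQ : lam * Qc < 1).
  { unfold lam. apply Rmult_lt_reg_r with (Qc + 16 + 2 * nR). lra.
    rewrite (Rmult_comm (/ _)), Rmult_assoc, Rinv_l by lra. lra. }
  assert (Htau : 0 < tau).
  { unfold tau. destruct Heps0 as [He _]. repeat apply Rmin_pos.
    - apply Rdiv_lt_0_compat; nra.
    - apply Rdiv_lt_0_compat. apply Rmult_lt_0_compat. nra. lra.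
      apply Rmult_lt_0_compat. apply Rmult_lt_0_compat. lra. apply pow_lt; lra. lra.
    - apply Rdiv_lt_0_compat. apply Rmult_lt_0_compat. lra. apply Rmin_pos; lra. lra. }
  assert (Hsst : 0 < sst) by (unfold sst; apply Rmin_pos; nra).
  assert (Hsst2 : sst <= rs / 2) by (unfold sst; apply Rmin_l).
  assert (Hsq : sqrt sst <= tau).
  { rewrite <- (sqrt_pow2 tau) by lra. apply sqrt_le_1_alt. unfold sst. apply Rmin_r. }
  assert (HR0 : 0 < R0) by (unfold R0; apply Rdiv_lt_0_compat; auto; apply pow_lt; auto).
  repeat split; auto.
Qed.


Section Eta.
Variable eta : C.
Hypothesis HR0 : R0 < Cmod (eta - k0)%C.
Let c := (eta - k0)%C.
Let den := (Cconj an * c - Cconj bn * Cconj c)%C.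
Let Dr := Cmod an ^ 2 - Cmod bn ^ 2.
Let W := Cdiv (RtoC Dr) den.
Let F := fun z => Cminus (f z) eta.

Lemma W_facts : c <> 0%C /\ den <> 0%C /\ W <> 0%C /\ Cmod W < sst ^ n /\
  (an * / W + Cconj bn * / Cconj W)%C = c.
Proof.
  destruct basic_facts as (HnR & Hdl & HSg & HdS & HKl & HQ & Hl & Hl16 & Hl2 & HlQ & Htau & Hsst & Hsst2 & Hsq & HR0p).
  assert (Hc : 0 < Cmod c) by (unfold c; lra).
  assert (Hc0 : c <> 0%C) by (intro E0; rewrite E0, Cmod_0 in Hc; lra).
  assert (Hden : dl * Cmod c <= Cmod den).
  { assert (H := lin_lower (Cconj an) (- Cconj bn)%C c).
    rewrite Cmod_opp, !Cmod_conj in H. unfold den.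
    replace (Cconj an * c - Cconj bn * Cconj c)%C with (Cconj an * c + - Cconj bn * Cconj c)%C by ring.
    auto. }
  assert (Hden0 : den <> 0%C).
  { intro E0. rewrite E0, Cmod_0 in Hden. nra. }
  assert (HD : Rabs Dr = dl * Sg).
  { unfold Dr, dl, Sg. replace (Cmod an ^ 2 - Cmod bn ^ 2) with ((Cmod an - Cmod bn) * (Cmod an + Cmod bn)) by ring.
    rewrite Rabs_mult. f_equal. apply Rabs_pos_eq. assert (H := Cmod_ge_0 an). assert (H' := Cmod_ge_0 bn). lra. }
  assert (HD0 : Dr <> 0) by (intro E0; rewrite E0, Rabs_R0 in HD; nra).
  assert (HW0 : W <> 0%C).
  { unfold W. intro E0. apply HD0. assert (H := f_equal (fun z => (z * den)%C) E0). simpl in H.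
    replace (RtoC Dr / den * den)%C with (RtoC Dr) in H by (field; auto).
    rewrite Cmult_0_l in H. injection H; auto. }
  assert (HWm : Cmod W <= Sg / Cmod c).
  { unfold W. rewrite Cmod_div by auto. rewrite Cmod_R, HD.
    assert (0 < Cmod den) by nra.
    apply Rle_trans with (dl * Sg / (dl * Cmod c)).
    { unfold Rdiv. apply Rmult_le_compat_l. nra. apply Rinv_le_contravar; nra. }
    right. field. lra. }
  assert (HWs : Sg / Cmod c < sst ^ n).
  { assert (Hp : 0 < sst ^ n) by (apply pow_lt; auto).
    assert (HR0' : Sg / sst ^ n < Cmod c) by exact HR0.
    apply (Rmult_lt_reg_r (Cmod c)); auto. unfold Rdiv. rewrite Rmult_assoc, Rinv_l by lra. rewrite Rmult_1_r.
    apply (Rmult_lt_compat_r (sst ^ n)) in HR0'; auto.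
    unfold Rdiv in HR0'. rewrite Rmult_assoc, Rinv_l, Rmult_1_r in HR0' by lra. lra. }
  repeat split; auto. lra.
  unfold W, Dr, den. apply W_identity; auto.
Qed.

Lemma local_newton (zeta : C) : ((zeta - z0) ^ n)%C = W ->
  0 < Cmod (zeta - z0)%C < sst /\
  exists L, HN_converges_to F zeta L /\ f L = eta /\ Cmod (L - zeta)%C < lam * Cmod (zeta - z0)%C /\
    (forall y, Cmod (y - zeta)%C < lam * Cmod (zeta - z0)%C -> f y = eta -> y = L).
Proof.
  intros Hz.
  destruct basic_facts as (HnR & Hdl & HSg & HdS & HKl & HQ & Hl & Hl16 & Hl2 & HlQ & Htau & Hsst & Hsst2 & Hsq & HR0p).
  destruct W_facts as (Hc0 & Hden0 & HW0 & HWs & HWid).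
  set (s := Cmod (zeta - z0)%C).
  assert (Hsn : s ^ n = Cmod W) by (unfold s; rewrite <- Cmod_pow, Hz; auto).
  assert (Hs0 : 0 < s).
  { destruct (Req_dec s 0) as [E0|E0]. 2:{ assert (H := Cmod_ge_0 (zeta - z0)%C). fold s in H. lra. }
    exfalso. apply HW0. rewrite <- Hz. apply Cmod_eq_0 in E0. rewrite E0.
    apply Cpow0; auto. }
  assert (Hss : s < sst).
  { apply pow_lt_inv with n; lra. }
  split; [split; auto|].
  assert (Hball : forall x, Cmod (x - zeta)%C < lam * s -> s / 2 <= Cmod (x - z0)%C <= 2 * s /\
             0 < Cmod (x - z0)%C <= rs).
  { intros x Hx. assert (H1 := Cmod_triangle (x - zeta)%C (zeta - z0)%C).
    assert (H2 := Cmod_sub_lower (zeta - z0)%C (x - zeta)%C).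
    replace (x - zeta + (zeta - z0))%C with (x - z0)%C in H1 by ring.
    replace (zeta - z0 + (x - zeta))%C with (x - z0)%C in H2 by ring. fold s in H1, H2.
    assert (lam * s <= s / 16) by nra. split; split; lra. }
  set (al := fun x => (- RtoC nR * an / (x - z0) ^ S n + e1 (x - z0))%C).
  set (be := fun x => (- RtoC nR * Cconj bn / (Cconj (x - z0)) ^ S n + e2 (x - z0))%C).
  set (M := 2 * (2 * s) ^ S n / (nR * dl)).
  set (K := (Kl + C2) / s ^ (n + 2)).
  assert (HsP : 0 < s ^ (n + 2)) by (apply pow_lt; auto).
  assert (HM : 0 < M) by (unfold M; apply Rdiv_lt_0_compat; [apply Rmult_lt_0_compat; [lra|apply pow_lt; lra]|nra]).
  assert (HK : 0 <= K) by (unfold K; apply Rdiv_le_0_compat; lra).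
  assert (Hsqs : sqrt (2 * s) <= 2 * tau).
  { apply Rle_trans with (sqrt 4 * sqrt sst).
    rewrite <- sqrt_mult by lra. apply sqrt_le_1_alt. nra.
    replace (sqrt 4) with 2. nra. rewrite <- (sqrt_pow2 2) by lra. f_equal. ring. }
  assert (HFz : F zeta = E (zeta - z0)%C).
  { unfold F. rewrite HH0. 2:{ split; fold s; lra. }
    rewrite <- Cpow_conj, Hz. unfold Cdiv. rewrite (Cmult_comm an), (Cmult_comm (Cconj bn)).
    replace (/ W * an + / Cconj W * Cconj bn + k0 + E (zeta - z0) - eta)%C
      with ((an * / W + Cconj bn * / Cconj W) + k0 + E (zeta - z0) - eta)%C by ring.
    rewrite HWid. unfold c. ring. }
  assert (Hsmall : 2 * (M * Cmod (F zeta)) < lam * s).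
  {     rewrite HFz.
    assert (H := HH1 (zeta - z0)%C ltac:(fold s; split; lra)). fold s in H.
    assert (Htau2 : tau <= lam * nR * dl / (8 * 2 ^ (n + 1) * (C0 + 1)))
      by (unfold tau; eapply Rle_trans; [apply Rmin_l|apply Rmin_r]).
    assert (Hsqs' : sqrt s <= tau) by (eapply Rle_trans; [|apply Hsq]; apply sqrt_le_1_alt; lra).
    assert (Hp2 : 0 < 2 ^ (n + 1)) by (apply pow_lt; lra).
    assert (HEs : Cmod (E (zeta - z0)%C) <= C0 * sqrt s / s ^ n).
    { apply Rmult_le_reg_r with (s ^ n). apply pow_lt; lra.
      unfold Rdiv. rewrite Rmult_assoc, Rinv_l by (apply pow_nonzero; lra). lra. }
    unfold M. replace (2 * s) with (s * 2) by ring. rewrite Rpow_mult_distr.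
    replace (S n) with (n + 1)%nat by lia.
    apply Rle_lt_trans with (2 * (2 * (s ^ (n + 1) * 2 ^ (n + 1)) / (nR * dl) * (C0 * sqrt s / s ^ n))).
    { apply Rmult_le_compat_l. lra. apply Rmult_le_compat_l. apply Rdiv_le_0_compat. 
      apply Rmult_le_pos. lra. apply Rmult_le_pos; apply pow_le; lra. nra. auto. }
    replace (2 * (2 * (s ^ (n + 1) * 2 ^ (n + 1)) / (nR * dl) * (C0 * sqrt s / s ^ n)))
      with (s * (4 * 2 ^ (n + 1) * C0 * sqrt s / (nR * dl))).
    2:{ replace (s ^ (n + 1)) with (s ^ n * s) by (rewrite pow_add; ring). field. repeat split; try lra; apply pow_nonzero; lra. }
    rewrite (Rmult_comm lam s). apply Rmult_lt_compat_l; auto.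
    apply Rmult_lt_reg_r with (nR * dl). nra.
    unfold Rdiv. rewrite Rmult_assoc, Rinv_l, Rmult_1_r by nra.
    assert (Hsp : 0 <= sqrt s) by apply sqrt_pos.
    apply Rle_lt_trans with (4 * 2 ^ (n + 1) * C0 * (lam * nR * dl / (8 * 2 ^ (n + 1) * (C0 + 1)))).
    { apply Rmult_le_compat_l. apply Rmult_le_pos; lra. lra. }
    replace (4 * 2 ^ (n + 1) * C0 * (lam * nR * dl / (8 * 2 ^ (n + 1) * (C0 + 1))))
      with (lam * nR * dl * (C0 / (2 * (C0 + 1)))) by (field; lra).
    assert (C0 / (2 * (C0 + 1)) < 1).
    { apply Rmult_lt_reg_r with (2 * (C0 + 1)). lra. unfold Rdiv. rewrite Rmult_assoc, Rinv_l by lra. lra. }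
    assert (0 < lam * nR * dl) by (apply Rmult_lt_0_compat; nra). nra. }
  destruct (core_newton F al be zeta (lam * s) M K) as (L & HLc & HL0 & HLd & HLu).
  - nra.
  - exact HM.
  - exact HK.
  -
    intros x y Hx Hy.
    destruct (Hball x Hx) as [Hx1 Hx2]. destruct (Hball y Hy) as [Hy1 Hy2].
    set (u := (x - z0)%C) in *. set (v := (y - z0)%C) in *.
    assert (Hu0 : u <> 0%C) by (intro E0; rewrite E0, Cmod_0 in Hx2; lra).
    assert (Hv0 : v <> 0%C) by (intro E0; rewrite E0, Cmod_0 in Hy2; lra).
    assert (Hyx : (y - x)%C = (v - u)%C) by (unfold u, v; ring).
    assert (Hh : Cmod (v - u)%C <= s / 8).
    { rewrite <- Hyx. replace (y - x)%C with ((y - zeta) - (x - zeta))%C by ring.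
      eapply Rle_trans; [apply Cmod_triangle|]. rewrite Cmod_opp. nra. }
    unfold F, al, be. rewrite Hyx. fold u v.
    rewrite (HT_identity an bn nR n E e1 e2 u v (f x) (f y) eta k0 Hu0 Hv0); [|apply HH0; auto|apply HH0; auto].
    set (R1 := (/ v ^ n - / u ^ n + RtoC nR * / u ^ S n * (v - u))%C).
    set (Er := (E v - E u - e1 u * (v - u) - e2 u * Cconj (v - u))%C).
    assert (HR1 : Cmod R1 <= (nR ^ 2 + nR) * (2 ^ (n + 2) / s ^ (n + 2)) * Cmod (v - u)%C ^ 2).
    { unfold R1, nR. eapply Rle_trans. apply (inv_taylor n u v (s / 2)); lra.
      right. f_equal. f_equal. replace (/ (s / 2)) with (2 * / s) by (field; lra). rewrite Rpow_mult_distr, pow_inv. unfold Rdiv. ring. }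
    assert (HEr : Cmod Er <= C2 / s ^ (n + 2) * Cmod (v - u)%C ^ 2).
    { assert (H := HH3 s u v Hs0 ltac:(lra) Hx1 Hy1 Hh). fold Er in H.
      apply Rmult_le_reg_r with (s ^ (n + 2)); auto.
      replace (C2 / s ^ (n + 2) * Cmod (v - u)%C ^ 2 * s ^ (n + 2)) with (C2 * Cmod (v - u)%C ^ 2) by (field; lra).
      auto. }
    eapply Rle_trans; [apply Cmod_triangle|].
    eapply Rle_trans; [apply Rplus_le_compat_r, Cmod_triangle|].
    rewrite !Cmod_mult, Cmod_conj, Cmod_conj.
    assert (Ha := Cmod_ge_0 an). assert (Hb := Cmod_ge_0 bn). assert (HR1p := Cmod_ge_0 R1).
    set (T := (nR ^ 2 + nR) * (2 ^ (n + 2) / s ^ (n + 2)) * Cmod (v - u)%C ^ 2) in *.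
    apply Rle_trans with ((Cmod an + Cmod bn) * T + C2 / s ^ (n + 2) * Cmod (v - u)%C ^ 2).
    { nra. }
    right. unfold T, K, Kl, Sg. field. lra.
  -
    intros x Hx. destruct (Hball x Hx) as [Hx1 Hx2].
    set (u := (x - z0)%C) in *.
    set (t := Cmod u) in *.
    assert (Hu0 : u <> 0%C) by (intro E0; unfold t in Hx2; rewrite E0, Cmod_0 in Hx2; lra).
    destruct (HH2 u Hx2) as [He1 He2]. fold t in He1, He2.
    assert (Hst : sqrt t <= 2 * tau).
    { eapply Rle_trans; [|apply Hsqs]. apply sqrt_le_1_alt. lra. }
    assert (HtS : 0 < t ^ S n) by (apply pow_lt; lra).
    assert (Htau1 : tau <= nR * dl / (8 * (C1 + 1))) by (unfold tau; eapply Rle_trans; [apply Rmin_l|apply Rmin_l]).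
    assert (HC1s : C1 * sqrt t <= nR * dl / 4).
    { apply Rle_trans with (C1 * (2 * (nR * dl / (8 * (C1 + 1))))).
      apply Rmult_le_compat_l; auto. assert (0 <= sqrt t) by apply sqrt_pos. lra.
      apply Rmult_le_reg_r with (8 * (C1 + 1)). lra.
      replace (C1 * (2 * (nR * dl / (8 * (C1 + 1)))) * (8 * (C1 + 1))) with (C1 * (2 * (nR * dl))) by (field; lra).
      nra. }
    assert (He1' : Cmod (e1 u) <= nR * dl / 4 / t ^ S n).
    { apply Rmult_le_reg_r with (t ^ S n); auto. replace (nR * dl / 4 / t ^ S n * t ^ S n) with (nR * dl / 4) by (field; lra). lra. }
    assert (He2' : Cmod (e2 u) <= nR * dl / 4 / t ^ S n).
    { apply Rmult_le_reg_r with (t ^ S n); auto. replace (nR * dl / 4 / t ^ S n * t ^ S n) with (nR * dl / 4) by (field; lra). lra. }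
    assert (HP1 : Cmod (- RtoC nR * an / u ^ S n)%C = nR * Cmod an / t ^ S n).
    { unfold Cdiv. rewrite !Cmod_mult, Cmod_opp, Cmod_R, Cmod_inv, Cmod_pow by (apply Cpow_nz; auto).
      rewrite Rabs_pos_eq by lra. unfold t. field. apply pow_nonzero. fold t; lra. }
    assert (HP2 : Cmod (- RtoC nR * Cconj bn / (Cconj u) ^ S n)%C = nR * Cmod bn / t ^ S n).
    { unfold Cdiv. rewrite !Cmod_mult, Cmod_opp, Cmod_R, Cmod_inv, Cmod_pow, Cmod_conj, Cmod_conj
        by (apply Cpow_nz, Cconj_neq0; auto).
      rewrite Rabs_pos_eq by lra. unfold t. field. apply pow_nonzero. fold t; lra. }
    unfold al, be. fold u.
    set (P1 := (- RtoC nR * an / u ^ S n)%C) in *.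
    set (P2 := (- RtoC nR * Cconj bn / Cconj u ^ S n)%C) in *.
    assert (HA1 := Cmod_triangle P1 (e1 u)). assert (HA2 := Cmod_sub_lower P1 (e1 u)).
    assert (HB1 := Cmod_triangle P2 (e2 u)). assert (HB2 := Cmod_sub_lower P2 (e2 u)).
    assert (Hdiff : Rabs (Cmod P1 - Cmod P2) = nR * dl / t ^ S n).
    { rewrite HP1, HP2. replace (nR * Cmod an / t ^ S n - nR * Cmod bn / t ^ S n)
        with ((nR / t ^ S n) * (Cmod an - Cmod bn)) by (field; lra).
      rewrite Rabs_mult, Rabs_pos_eq. unfold dl. field. lra.
      apply Rdiv_le_0_compat; lra. }
    assert (Hlow : nR * dl / 2 / t ^ S n <= Rabs (Cmod (P1 + e1 u)%C - Cmod (P2 + e2 u)%C)).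
    { revert Hdiff. unfold Rabs. destruct (Rcase_abs (Cmod P1 - Cmod P2)); destruct Rcase_abs;
        intros Hd; try lra;
        replace (nR * dl / 2 / t ^ S n) with (nR * dl / t ^ S n - 2 * (nR * dl / 4 / t ^ S n)) by (field; lra);
        lra. }
    eapply Rle_trans; [|apply Hlow].
    assert (Hnd : 0 < nR * dl) by nra.
    assert (Hts : t ^ S n <= (2 * s) ^ S n) by (apply pow_incr; lra).
    assert (H2s : 0 < (2 * s) ^ S n) by (apply pow_lt; lra).
    assert (HMinv : / M = nR * dl / 2 * / (2 * s) ^ S n).
    { unfold M. field. split; lra. }
    rewrite HMinv. unfold Rdiv. apply Rmult_le_compat_l. lra. apply Rinv_le_contravar; auto.
  - exact Hsmall.
  -
    replace (2 * (lam * s) * M * K) with (lam * Qc).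
    auto.
    unfold M, K, Qc. rewrite Rpow_mult_distr. replace (n + 2)%nat with (S (S n)) by lia.
    replace (n + 1)%nat with (S n) by lia. simpl. field.
    repeat split; try lra; try (apply pow_nonzero; lra).
  - exists L. split; auto. split.
    { unfold F in HL0. cbv beta in HL0. replace (f L) with (f L - eta + eta)%C by ring. rewrite HL0. ring. }
    split.
    { lra. }
    intros y Hy Hfy. apply HLu; auto. unfold F. rewrite Hfy. ring.
Qed.

Lemma localize (z zeta0 : C) : 0 < Cmod (z - z0)%C < rho -> f z = eta -> (zeta0 ^ n)%C = W ->
  exists w, (w ^ n)%C = 1%C /\ Cmod (z - (z0 + zeta0 * w))%C < lam * Cmod zeta0.
Proof.
  intros Hz Hfz Hz0.
  destruct basic_facts as (HnR & Hdl & HSg & HdS & HKl & HQ & Hl & Hl16 & Hl2 & HlQ & Htau & Hsst & Hsst2 & Hsq & HR0p).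
  destruct W_facts as (Hc0 & Hden0 & HW0 & HWs & HWid).
  assert (Hzeta0 : zeta0 <> 0%C).
  { intro E0. apply HW0. rewrite <- Hz0, E0. apply Cpow0; auto. }
  set (u := (z - z0)%C) in *.
  assert (Hu0 : u <> 0%C) by (intro E0; rewrite E0, Cmod_0 in Hz; lra).
  assert (Hun : (u ^ n)%C <> 0%C) by (apply Cpow_nz; auto).
  assert (Hur : 0 < Cmod u <= rs) by (unfold rho in Hz; lra).
  assert (Hf := HH0 z Hur). fold u in Hf. rewrite Hfz in Hf.
  set (U := (/ u ^ n)%C). set (U0 := (/ W)%C).
  assert (HU : (an * U + Cconj bn * Cconj U)%C = (c - E u)%C).
  { unfold U. rewrite Cinv_conj, Cpow_conj by auto. unfold c. rewrite Hf. unfold Cdiv. ring. }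
  assert (HU0 : (an * U0 + Cconj bn * Cconj U0)%C = c).
  { unfold U0. rewrite Cinv_conj by auto. auto. }
  set (V := (U - U0)%C).
  assert (HV : (an * V + Cconj bn * Cconj V)%C = (- E u)%C).
  { unfold V. rewrite Cminus_conj.
    replace (an * (U - U0) + Cconj bn * (Cconj U - Cconj U0))%C
      with ((an * U + Cconj bn * Cconj U) - (an * U0 + Cconj bn * Cconj U0))%C by ring.
    rewrite HU, HU0. ring. }
  assert (Hl1 := lin_lower an (Cconj bn) V). rewrite HV, Cmod_opp, Cmod_conj in Hl1. fold dl in Hl1.
  assert (HUm : Cmod U * Cmod u ^ n = 1).
  { unfold U. rewrite Cmod_inv, Cmod_pow by auto. field. rewrite <- Cmod_pow. apply Cmod_gt_0 in Hun. lra. }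
  assert (Hpun : 0 < Cmod u ^ n) by (apply pow_lt; lra).
  assert (HE := HH1 u Hur).
  set (m := Rmin (/2) eps0).
  assert (Hm : 0 < m) by (unfold m; destruct Heps0; apply Rmin_pos; lra).
  assert (Htau3 : tau <= dl * m / (4 * (C0 + 1))) by (unfold tau; apply Rmin_r).
  assert (Hsqu : sqrt (Cmod u) <= 2 * tau).
  { apply Rle_trans with (sqrt 4 * sqrt sst).
    rewrite <- sqrt_mult by lra. apply sqrt_le_1_alt. unfold rho in Hz. lra.
    replace (sqrt 4) with 2. nra. rewrite <- (sqrt_pow2 2) by lra. f_equal. ring. }
  assert (HC0s : C0 * sqrt (Cmod u) <= dl * m / 2).
  { apply Rle_trans with (C0 * (2 * (dl * m / (4 * (C0 + 1))))).
    apply Rmult_le_compat_l; auto. assert (0 <= sqrt (Cmod u)) by apply sqrt_pos. lra.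
    replace (C0 * (2 * (dl * m / (4 * (C0 + 1))))) with ((dl * m / 2) * (C0 / (C0 + 1))) by (field; lra).
    assert (C0 / (C0 + 1) <= 1).
    { apply Rmult_le_reg_r with (C0 + 1). lra. unfold Rdiv. rewrite Rmult_assoc, Rinv_l by lra. lra. }
    assert (0 < dl * m / 2) by (apply Rmult_lt_0_compat; [nra|lra]). nra. }
  assert (HVb : Cmod V <= m / 2 * Cmod U).
  { apply Rmult_le_reg_l with dl; auto. eapply Rle_trans; [apply Hl1|].
    apply Rmult_le_reg_r with (Cmod u ^ n); auto.
    assert (Hx : Cmod (E u) * Cmod u ^ n <= dl * m / 2) by lra.
    assert (Hy : dl * (m / 2 * Cmod U) * Cmod u ^ n = dl * m / 2 * (Cmod U * Cmod u ^ n)) by (unfold Rdiv; ring). rewrite Hy, HUm. lra. }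
  assert (HUp : 0 < Cmod U) by nra.
  set (sg := (u / zeta0)%C).
  assert (Hsg : (sg ^ n - 1)%C = (- V / U)%C).
  { unfold sg, V, U0, U. unfold Cdiv. rewrite Cpow_mult_l, Cpow_inv by auto. rewrite Hz0.
    field. repeat split; auto. }
  assert (Hsgb : Cmod (sg ^ n - 1)%C <= eps0).
  { rewrite Hsg. unfold Cdiv. rewrite Cmod_mult, Cmod_opp, Cmod_inv.
    2:{ intro E0. rewrite E0, Cmod_0 in HUp. lra. }
    apply Rle_trans with (m / 2). apply Rmult_le_reg_r with (Cmod U); auto.
    rewrite Rmult_assoc, Rinv_l by lra. lra.
    assert (m <= eps0) by (unfold m; apply Rmin_r). lra. }
  destruct Heps0 as [_ Hroot]. destruct (Hroot sg Hsgb) as [w [Hw1 Hw2]].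
  exists w. split; auto.
  replace (z - (z0 + zeta0 * w))%C with (zeta0 * (sg - w))%C.
  2:{ unfold sg, u. field. auto. }
  rewrite Cmod_mult. assert (0 < Cmod zeta0) by (apply Cmod_gt_0; auto).
  apply Rlt_le_trans with (Cmod zeta0 * (lam / 2)). apply Rmult_lt_compat_l; auto. nra.
Qed.

Lemma eta_conclusion :
    (exists sols : list C, length sols = n /\ NoDup sols /\
       forall z, In z sols <-> (0 < Cmod (Cminus z z0) < rho /\ f z = eta)) /\
    (forall zeta, Cpow (Cminus zeta z0) n = W ->
       exists L, HN_converges_to F zeta L /\
                 0 < Cmod (Cminus L z0) < rho /\ f L = eta) /\
    (forall zeta1 zeta2 L,
       Cpow (Cminus zeta1 z0) n = W -> Cpow (Cminus zeta2 z0) n = W ->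
       HN_converges_to F zeta1 L -> HN_converges_to F zeta2 L -> zeta1 = zeta2) /\
    (forall z, 0 < Cmod (Cminus z z0) < rho -> f z = eta ->
       exists zeta, Cpow (Cminus zeta z0) n = W /\ HN_converges_to F zeta z).
Proof.
  destruct basic_facts as (HnR & Hdl & HSg & HdS & HKl & HQ & Hl & Hl16 & Hl2 & HlQ & Htau & Hsst & Hsst2 & Hsq & HR0p).
  destruct W_facts as (Hc0 & Hden0 & HW0 & HWs & HWid).
  assert (Hdisc : forall zeta L, 0 < Cmod (zeta - z0)%C < sst ->
            Cmod (L - zeta)%C < lam * Cmod (zeta - z0)%C -> 0 < Cmod (L - z0)%C < rho).
  { intros zeta L [Hs1 Hs2] HL.
    assert (H1 := Cmod_triangle (L - zeta)%C (zeta - z0)%C).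
    assert (H2 := Cmod_sub_lower (zeta - z0)%C (L - zeta)%C).
    replace (L - zeta + (zeta - z0))%C with (L - z0)%C in H1 by ring.
    replace (zeta - z0 + (L - zeta))%C with (L - z0)%C in H2 by ring.
    unfold rho. assert (lam * Cmod (zeta - z0)%C <= Cmod (zeta - z0)%C / 16) by nra. split; lra. }
  assert (PA : forall zeta, Cpow (Cminus zeta z0) n = W ->
       exists L, HN_converges_to F zeta L /\ 0 < Cmod (Cminus L z0) < rho /\ f L = eta).
  { intros zeta Hz. destruct (local_newton zeta Hz) as [Hs [L (HL1 & HL2 & HL3 & _)]].
    exists L. split; auto. split; auto. apply (Hdisc zeta L); auto. }
  assert (PB : forall zeta1 zeta2 L,
       Cpow (Cminus zeta1 z0) n = W -> Cpow (Cminus zeta2 z0) n = W ->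
       HN_converges_to F zeta1 L -> HN_converges_to F zeta2 L -> zeta1 = zeta2).
  { intros z1 z2 L Hz1 Hz2 [_ HC1'] [_ HC2'].
    destruct (local_newton z1 Hz1) as [Hs1 [L1 ([_ HL1c] & _ & HL1d & _)]].
    destruct (local_newton z2 Hz2) as [Hs2 [L2 ([_ HL2c] & _ & HL2d & _)]].
    assert (E1 : L = L1) by (apply (filterlim_locally_unique _ L L1 HC1' HL1c)).
    assert (E2 : L = L2) by (apply (filterlim_locally_unique _ L L2 HC2' HL2c)).
    subst L1 L2.
    set (s1 := Cmod (z1 - z0)%C) in *. set (s2 := Cmod (z2 - z0)%C) in *.
    assert (Hs12 : s1 = s2).
    { apply pow_inj_nonneg with n; auto. apply Cmod_ge_0. apply Cmod_ge_0.
      unfold s1, s2. rewrite <- !Cmod_pow. rewrite Hz1, Hz2. auto. }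
    assert (Hd : Cmod (z2 - z1)%C < 2 * lam * s1).
    { replace (z2 - z1)%C with ((L - z1) - (L - z2))%C by ring.
      eapply Rle_lt_trans; [apply Cmod_triangle|]. rewrite Cmod_opp. rewrite Hs12 in HL1d |- *. lra. }
    assert (Hz10 : (z1 - z0)%C <> 0%C) by (intro E0; unfold s1 in Hs1; rewrite E0, Cmod_0 in Hs1; lra).
    set (v := ((z2 - z0) / (z1 - z0))%C).
    assert (Hv : (v ^ n)%C = 1%C).
    { unfold v, Cdiv. rewrite Cpow_mult_l, Cpow_inv, Hz1, Hz2 by auto. field. auto. }
    destruct (Ceq_dec v 1) as [Hv1|Hv1].
    { unfold v in Hv1. assert (H := f_equal (fun t => (t * (z1 - z0))%C) Hv1). simpl in H.
      replace ((z2 - z0) / (z1 - z0) * (z1 - z0))%C with (z2 - z0)%C in H by (field; auto).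
      replace z2 with (z2 - z0 + z0)%C by ring. rewrite H. ring. }
    exfalso. assert (Hsep := unity_sep v n Hn Hv Hv1). fold nR in Hsep.
    assert (Hv1' : Cmod (v - 1)%C = Cmod (z2 - z1)%C / s1).
    { unfold v. replace ((z2 - z0) / (z1 - z0) - 1)%C with ((z2 - z1) / (z1 - z0))%C by (field; auto).
      rewrite Cmod_div by auto. auto. }
    rewrite Hv1' in Hsep.
    assert (Hs1p : 0 < s1) by lra.
    assert (nR * (Cmod (z2 - z1)%C / s1) < 1).
    { apply Rmult_lt_reg_r with s1; auto. replace (nR * (Cmod (z2 - z1)%C / s1) * s1) with (nR * Cmod (z2 - z1)%C) by (field; lra).
      apply Rle_lt_trans with (nR * (2 * lam * s1)). apply Rmult_le_compat_l; lra.
      nra. }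
    lra. }
  destruct (root_exists W n Hn HW0) as [zeta0 Hzeta0].
  assert (Hzeta00 : zeta0 <> 0%C).
  { intro E0. apply HW0. rewrite <- Hzeta0, E0. apply Cpow0; auto. }
  assert (Hzj : forall j, Cpow (Cminus (z0 + zeta0 * omega n j) z0) n = W).
  { intros j. replace (Cminus (z0 + zeta0 * omega n j) z0) with (zeta0 * omega n j)%C by (unfold Cminus; ring).
    rewrite Cpow_mult_l, omega_pow, Hzeta0 by auto. ring. }
  assert (Hmodj : forall w, (w ^ n)%C = 1%C -> Cmod (Cminus (z0 + zeta0 * w) z0) = Cmod zeta0).
  { intros w Hw. replace (Cminus (z0 + zeta0 * w) z0) with (zeta0 * w)%C by (unfold Cminus; ring).
    rewrite Cmod_mult, (unity_abs w n Hn Hw). ring. }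
  assert (PC : forall z, 0 < Cmod (Cminus z z0) < rho -> f z = eta ->
       exists j, (j < n)%nat /\ Cmod (z - (z0 + zeta0 * omega n j))%C < lam * Cmod zeta0).
  { intros z Hz Hfz. destruct (localize z zeta0 Hz Hfz Hzeta0) as [w [Hw1 Hw2]].
    destruct (unity_classify n w Hn Hw1) as [j [Hj Hwj]]. exists j. subst w. split; auto. }
  split; [|split; [exact PA|split; [exact PB|]]].
  2:{ intros z Hz Hfz. destruct (PC z Hz Hfz) as [j [Hj Hzj']].
      exists (z0 + zeta0 * omega n j)%C. split; auto.
      destruct (local_newton _ (Hzj j)) as [_ [L (HL1 & HL2 & HL3 & HL4)]].
      assert (z = L).
      { apply HL4; auto. rewrite Hmodj; auto. apply omega_pow; auto. }
      subst; auto. }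
  assert (Hex : forall j, exists L, HN_converges_to F (z0 + zeta0 * omega n j)%C L /\ f L = eta /\
     Cmod (L - (z0 + zeta0 * omega n j))%C < lam * Cmod zeta0 /\
     (forall y, Cmod (y - (z0 + zeta0 * omega n j))%C < lam * Cmod zeta0 -> f y = eta -> y = L)).
  { intros j. destruct (local_newton _ (Hzj j)) as [_ [L HL]].
    rewrite Hmodj in HL by (apply omega_pow; auto). exists L. exact HL. }
  set (Lf := fun j => proj1_sig (constructive_indefinite_description _ (Hex j))).
  assert (HLf : forall j, HN_converges_to F (z0 + zeta0 * omega n j)%C (Lf j) /\ f (Lf j) = eta /\
     Cmod (Lf j - (z0 + zeta0 * omega n j))%C < lam * Cmod zeta0 /\
     (forall y, Cmod (y - (z0 + zeta0 * omega n j))%C < lam * Cmod zeta0 -> f y = eta -> y = Lf j)).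
  { intros j. unfold Lf. apply (proj2_sig (constructive_indefinite_description _ (Hex j))). }
  assert (Hzs : 0 < Cmod zeta0 < sst).
  { destruct (local_newton _ (Hzj 0%nat)) as [Hs _]. rewrite Hmodj in Hs; auto. apply omega_pow; auto. }
  exists (map Lf (seq 0 n)). split; [|split].
  - rewrite length_map, length_seq. auto.
  - apply NoDup_map_NoDup_ForallPairs; [|apply seq_NoDup].
    intros j k Hj Hk Heq. apply in_seq in Hj. apply in_seq in Hk.
    destruct (HLf j) as [Hcj _]. destruct (HLf k) as [Hck _]. rewrite Heq in Hcj.
    assert (Hjk := PB _ _ _ (Hzj j) (Hzj k) Hcj Hck).
    apply (omega_inj n j k); try lia.
    assert (H := f_equal (fun t => ((t - z0) / zeta0)%C) Hjk). simpl in H.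
    replace ((z0 + zeta0 * omega n j - z0) / zeta0)%C with (omega n j) in H by (field; auto).
    replace ((z0 + zeta0 * omega n k - z0) / zeta0)%C with (omega n k) in H by (field; auto).
    auto.
  - intros z. split.
    + intros Hin. apply in_map_iff in Hin. destruct Hin as [j [Hj _]]. subst z.
      destruct (HLf j) as (_ & Hf & Hd & _). split; auto.
      apply (Hdisc (z0 + zeta0 * omega n j)%C); rewrite Hmodj by (apply omega_pow; auto); auto.
    + intros [Hz Hfz]. destruct (PC z Hz Hfz) as [j [Hj Hzj']].
      apply in_map_iff. exists j. split.
      * destruct (HLf j) as (_ & _ & _ & Hu). symmetry. apply Hu; auto.
      * apply in_seq. lia.
Qed.

End Eta.

Theorem model_thm : exists rho0 : R, 0 < rho0 <= rs /\
  exists R00 : R, forall eta : C,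
    let c := Cminus eta k0 in
    R00 < Cmod c ->
    let w := Cdiv (RtoC ((Cmod an)^2 - (Cmod bn)^2))
                  (Cminus (Cmult (Cconj an) c) (Cmult (Cconj bn) (Cconj c))) in
    let F := fun z => Cminus (f z) eta in
    (exists sols : list C, length sols = n /\ NoDup sols /\
       forall z, In z sols <-> (0 < Cmod (Cminus z z0) < rho0 /\ f z = eta)) /\
    (forall zeta, Cpow (Cminus zeta z0) n = w ->
       exists L, HN_converges_to F zeta L /\
                 0 < Cmod (Cminus L z0) < rho0 /\ f L = eta) /\
    (forall zeta1 zeta2 L,
       Cpow (Cminus zeta1 z0) n = w -> Cpow (Cminus zeta2 z0) n = w ->
       HN_converges_to F zeta1 L -> HN_converges_to F zeta2 L -> zeta1 = zeta2) /\
    (forall z, 0 < Cmod (Cminus z z0) < rho0 -> f z = eta ->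
       exists zeta, Cpow (Cminus zeta z0) n = w /\ HN_converges_to F zeta z).
Proof.
  destruct basic_facts as (HnR & Hdl & HSg & HdS & HKl & HQ & Hl & Hl16 & Hl2 & HlQ & Htau & Hsst & Hsst2 & Hsq & HR0p).
  exists rho. split. unfold rho; lra.
  exists R0. intros eta c HR. exact (eta_conclusion eta HR).
Qed.

End Model.


Lemma coef_bound (a : Z -> C) (n : nat) (z0 : C) (r : R) (f : C -> C) (A : C) (b : Z -> C) :
  0 < r ->
  (forall z, 0 < Cmod (Cminus z z0) < r ->
     exists sa sb : C,
       is_series (V := C_NormedModule) (laurent_term a n (Cminus z z0)) sa /\
       is_series (V := C_NormedModule) (laurent_term b n (Cminus z z0)) sb /\
       f z = Cplus (Cplus sa (Cconj sb))
                   (Cmult (Cmult (RtoC 2) A) (RtoC (ln (Cmod (Cminus z z0)))))) ->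
  (exists Ba, forall m, Cmod (a (Z.of_nat m - Z.of_nat n)%Z) * (r / 2) ^ m <= Ba) /\
  (exists Bb, forall m, Cmod (b (Z.of_nat m - Z.of_nat n)%Z) * (r / 2) ^ m <= Bb).
Proof.
  intros hr hf.
  set (w1 := RtoC (r / 2)).
  assert (Hw1 : Cmod w1 = r / 2) by (unfold w1; rewrite Cmod_R, Rabs_pos_eq; lra).
  assert (Hw10 : w1 <> 0%C) by (intro E; rewrite E, Cmod_0 in Hw1; lra).
  destruct (hf (z0 + w1)%C) as [sa [sb [Hsa [Hsb _]]]].
  { replace (Cminus (z0 + w1) z0) with w1 by (unfold Cminus; ring). lra. }
  replace (Cminus (z0 + w1) z0) with w1 in Hsa, Hsb by (unfold Cminus; ring).
  apply laurent_series in Hsa; auto. apply laurent_series in Hsb; auto.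
  destruct (terms_bounded _ _ Hsa) as [Ba HBa]. destruct (terms_bounded _ _ Hsb) as [Bb HBb].
  split; [exists Ba|exists Bb]; intros m; [specialize (HBa m)|specialize (HBb m)];
    rewrite Cmod_mult, Cmod_pow, Hw1 in *; auto.
Qed.

Lemma series_id (c : nat -> C) (n : nat) (w s P : C) : w <> 0%C ->
  is_series (V := C_NormedModule) (fun m => c m * w ^ m)%C (w ^ n * s)%C ->
  is_series (V := C_NormedModule) (fun m => c m * w ^ m)%C P -> s = (P / w ^ n)%C.
Proof.
  intros Hw H1 H2. assert (E := series_unique _ _ _ H1 H2). rewrite <- E. field. apply Cpow_nz; auto.
Qed.

Lemma sqrt_ge_self (t : R) : 0 <= t <= 1 -> t <= sqrt t.
Proof.
  intros Ht. assert (Hs := sqrt_pos t). assert (Hss : sqrt t * sqrt t = t) by (apply sqrt_sqrt; lra).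
  assert (sqrt t <= 1). { rewrite <- sqrt_1. apply sqrt_le_1_alt. lra. } nra.
Qed.

Section Laurent.
Variables (z0 : C) (r : R) (f : C -> C) (n : nat) (a b : Z -> C) (A : C).
Hypothesis hr : 0 < r.
Hypothesis hn : (1 <= n)%nat.
Hypothesis hf : forall z, 0 < Cmod (Cminus z z0) < r ->
     exists sa sb : C,
       is_series (V := C_NormedModule) (laurent_term a n (Cminus z z0)) sa /\
       is_series (V := C_NormedModule) (laurent_term b n (Cminus z z0)) sb /\
       f z = Cplus (Cplus sa (Cconj sb))
                   (Cmult (Cmult (RtoC 2) A) (RtoC (ln (Cmod (Cminus z z0))))).

Let an := a (- Z.of_nat n)%Z.
Let bn := b (- Z.of_nat n)%Z.
Let k0 := Cplus (a 0%Z) (Cconj (b 0%Z)).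
Let nR := INR n.

Lemma laurent_model : exists (E e1 e2 : C -> C) (rs C0 C1 C2 : R),
  0 < rs <= 1 /\ rs <= r /\ 0 <= C0 /\ 0 <= C1 /\ 0 <= C2 /\
  (forall z, 0 < Cmod (z - z0)%C <= rs ->
     f z = (an / (z - z0) ^ n + Cconj bn / (Cconj (z - z0)) ^ n + k0 + E (z - z0))%C) /\
  (forall w, 0 < Cmod w <= rs -> Cmod (E w) * Cmod w ^ n <= C0 * sqrt (Cmod w)) /\
  (forall w, 0 < Cmod w <= rs ->
     Cmod (e1 w) * Cmod w ^ S n <= C1 * sqrt (Cmod w) /\ Cmod (e2 w) * Cmod w ^ S n <= C1 * sqrt (Cmod w)) /\
  (forall s x y, 0 < s -> 2 * s <= rs -> s / 2 <= Cmod x <= 2 * s -> s / 2 <= Cmod y <= 2 * s ->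
     Cmod (y - x)%C <= s / 8 ->
     Cmod (E y - E x - e1 x * (y - x) - e2 x * Cconj (y - x))%C * s ^ (n + 2) <= C2 * Cmod (y - x)%C ^ 2).
Proof.
  destruct (coef_bound a n z0 r f A b hr hf) as [[Ba HBa] [Bb HBb]].
  destruct (pseries_props (fun m => a (Z.of_nat m - Z.of_nat n)%Z) (r / 2) Ba ltac:(lra) HBa)
    as (P & P' & DP & KP & HDP & HKP & HP0 & HPs & HP'b & HPt).
  destruct (pseries_props (fun m => b (Z.of_nat m - Z.of_nat n)%Z) (r / 2) Bb ltac:(lra) HBb)
    as (Q & Q' & DQ & KQ & HDQ & HKQ & HQ0 & HQs & HQ'b & HQt).
  replace (Z.of_nat 0 - Z.of_nat n)%Z with (- Z.of_nat n)%Z in HP0, HQ0 by lia.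
  fold an in HP0. fold bn in HQ0.
  set (rs := Rmin (r / 12) (/2)).
  assert (Hrs1 : rs <= r / 2 / 6) by (unfold rs; eapply Rle_trans; [apply Rmin_l|lra]).
  assert (Hrs2 : rs <= /2) by (unfold rs; apply Rmin_r).
  assert (Hrs0 : 0 < rs) by (unfold rs; apply Rmin_pos; lra).
  set (LP := DP + KP). set (LQ := DQ + KQ).
  assert (HLP : forall x, Cmod x <= rs -> Cmod (P x - an)%C <= LP * Cmod x).
  { intros x Hx. assert (H0 : Cmod (RtoC 0) <= r / 2 / 6) by (rewrite Cmod_0; lra).
    assert (H := HPt 0%C x H0 ltac:(lra)). rewrite HP0 in H.
    replace (x - 0)%C with x in H by ring.
    replace (P x - an)%C with ((P x - an - P' 0%C * x) + P' 0%C * x)%C by ring.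
    eapply Rle_trans; [apply Cmod_triangle|]. rewrite Cmod_mult.
    assert (Hd := HP'b 0%C H0). assert (Hx0 := Cmod_ge_0 x).
    assert (Cmod x ^ 2 <= Cmod x) by (simpl; nra).
    unfold LP. assert (KP * Cmod x ^ 2 <= KP * Cmod x) by (apply Rmult_le_compat_l; auto). nra. }
  assert (HLQ : forall x, Cmod x <= rs -> Cmod (Q x - bn)%C <= LQ * Cmod x).
  { intros x Hx. assert (H0 : Cmod (RtoC 0) <= r / 2 / 6) by (rewrite Cmod_0; lra).
    assert (H := HQt 0%C x H0 ltac:(lra)). rewrite HQ0 in H.
    replace (x - 0)%C with x in H by ring.
    replace (Q x - bn)%C with ((Q x - bn - Q' 0%C * x) + Q' 0%C * x)%C by ring.
    eapply Rle_trans; [apply Cmod_triangle|]. rewrite Cmod_mult.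
    assert (Hd := HQ'b 0%C H0). assert (Hx0 := Cmod_ge_0 x).
    assert (Cmod x ^ 2 <= Cmod x) by (simpl; nra).
    unfold LQ. assert (KQ * Cmod x ^ 2 <= KQ * Cmod x) by (apply Rmult_le_compat_l; auto). nra. }
  set (GP := fun w => ((P w - an) / w ^ n)%C).
  set (GQ := fun w => ((Q w - bn) / w ^ n)%C).
  set (GP' := fun w => (- RtoC nR * (P w - an) / w ^ S n + P' w / w ^ n)%C).
  set (GQ' := fun w => (- RtoC nR * (Q w - bn) / w ^ S n + Q' w / w ^ n)%C).
  set (E := fun w => (GP w - a 0%Z + Cconj (GQ w - b 0%Z) + RtoC 2 * A * RtoC (ln (Cmod w)))%C).
  set (e1 := fun w => (GP' w + A / w)%C).
  set (e2 := fun w => (Cconj (GQ' w) + A / Cconj w)%C).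
  exists E, e1, e2, rs, (LP + LQ + Cmod (a 0%Z) + Cmod (b 0%Z) + 4 * Cmod A),
    (nR * (LP + LQ) + DP + DQ + Cmod A),
    (((nR ^ 2 + nR) * 2 ^ (n + 3) * LP + nR * 2 ^ (n + 1) * (DP + KP) + 2 ^ n * KP) +
     ((nR ^ 2 + nR) * 2 ^ (n + 3) * LQ + nR * 2 ^ (n + 1) * (DQ + KQ) + 2 ^ n * KQ) + 48 * Cmod A).
  assert (HnR : 1 <= nR) by (apply (le_INR 1); auto).
  assert (HA := Cmod_ge_0 A). assert (Ha0 := Cmod_ge_0 (a 0%Z)). assert (Hb0 := Cmod_ge_0 (b 0%Z)).
  assert (HLP0 : 0 <= LP) by (unfold LP; lra). assert (HLQ0 : 0 <= LQ) by (unfold LQ; lra).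
  split. lra. split. unfold rs. eapply Rle_trans; [apply Rmin_l|lra].
  split. lra. split. nra. split.
  { assert (0 <= 2 ^ (n + 3)) by (apply pow_le; lra). assert (0 <= 2 ^ (n + 1)) by (apply pow_le; lra).
    assert (0 <= 2 ^ n) by (apply pow_le; lra). assert (0 <= nR ^ 2 + nR) by nra. repeat (apply Rplus_le_le_0_compat || apply Rmult_le_pos); try lra; try nra. }
  split.
  {
    intros z Hz. set (w := (z - z0)%C) in *.
    assert (Hw0 : w <> 0%C) by (intro E0; rewrite E0, Cmod_0 in Hz; lra).
    destruct (hf z) as [sa [sb [Hsa [Hsb Hfz]]]]. { fold w. lra. }
    fold w in Hsa, Hsb, Hfz.
    apply laurent_series in Hsa; auto. apply laurent_series in Hsb; auto.
    rewrite (series_id _ n w sa (P w) Hw0 Hsa (HPs w ltac:(lra))) in Hfz.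
    rewrite (series_id _ n w sb (Q w) Hw0 Hsb (HQs w ltac:(lra))) in Hfz.
    rewrite Hfz. unfold E, GP, GQ, k0.
    assert (Hwn : (w ^ n)%C <> 0%C) by (apply Cpow_nz; auto).
    assert (Hcwn : (Cconj w ^ n)%C <> 0%C) by (apply Cpow_nz, Cconj_nz; auto).
    rewrite !Cminus_conj, !Cdiv_conj, !Cminus_conj, !Cpow_conj by auto.
    field. auto. }
  split.
  {
    intros w Hw. assert (Hw0 : w <> 0%C) by (intro E0; rewrite E0, Cmod_0 in Hw; lra).
    assert (Hwn : (w ^ n)%C <> 0%C) by (apply Cpow_nz; auto).
    assert (Hw1 : Cmod w ^ n <= Cmod w) by (apply pow_le_self; auto; lra).
    assert (Hpn : 0 <= Cmod w ^ n) by (apply pow_le, Cmod_ge_0).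
    assert (Hsq : Cmod w <= sqrt (Cmod w)) by (apply sqrt_ge_self; lra).
    assert (Hln : Cmod w * Rabs (ln (Cmod w)) <= 2 * sqrt (Cmod w)) by (apply tlnt_bound; lra).
    assert (HGP : Cmod (GP w) * Cmod w ^ n <= LP * Cmod w).
    { unfold GP. rewrite Cmod_div, Cmod_pow by auto. rewrite <- Cmod_pow.
      replace (Cmod (P w - an)%C / Cmod (w ^ n)%C * Cmod (w ^ n)%C) with (Cmod (P w - an)%C)
        by (field; apply Cmod_gt_0 in Hwn; lra).
      apply HLP. lra. }
    assert (HGQ : Cmod (GQ w) * Cmod w ^ n <= LQ * Cmod w).
    { unfold GQ. rewrite Cmod_div, Cmod_pow by auto. rewrite <- Cmod_pow.
      replace (Cmod (Q w - bn)%C / Cmod (w ^ n)%C * Cmod (w ^ n)%C) with (Cmod (Q w - bn)%C)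
        by (field; apply Cmod_gt_0 in Hwn; lra).
      apply HLQ. lra. }
    assert (HE : Cmod (E w) <= Cmod (GP w) + Cmod (a 0%Z) + Cmod (GQ w) + Cmod (b 0%Z) + 2 * Cmod A * Rabs (ln (Cmod w))).
    { unfold E. eapply Rle_trans; [apply Cmod_triangle|].
      eapply Rle_trans; [apply Rplus_le_compat_r, Cmod_triangle|].
      rewrite Cmod_conj, !Cmod_mult, !Cmod_R, (Rabs_pos_eq 2) by lra.
      assert (H1 := Cmod_triangle (GP w) (- a 0%Z)%C). assert (H2 := Cmod_triangle (GQ w) (- b 0%Z)%C).
      rewrite Cmod_opp in H1, H2. unfold Cminus. lra. }
    assert (HlnA : 2 * Cmod A * Rabs (ln (Cmod w)) * Cmod w ^ n <= 4 * Cmod A * sqrt (Cmod w)).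
    { assert (Hl0 := Rabs_pos (ln (Cmod w))).
      apply Rle_trans with (2 * Cmod A * (Cmod w * Rabs (ln (Cmod w)))).
      { replace (2 * Cmod A * Rabs (ln (Cmod w)) * Cmod w ^ n) with (2 * Cmod A * (Cmod w ^ n * Rabs (ln (Cmod w)))) by ring.
        apply Rmult_le_compat_l. lra. apply Rmult_le_compat_r; auto. }
      nra. }
    apply Rle_trans with ((Cmod (GP w) + Cmod (a 0%Z) + Cmod (GQ w) + Cmod (b 0%Z) + 2 * Cmod A * Rabs (ln (Cmod w))) * Cmod w ^ n).
    { apply Rmult_le_compat_r; auto. }
    assert (Cmod (a 0%Z) * Cmod w ^ n <= Cmod (a 0%Z) * sqrt (Cmod w)) by (apply Rmult_le_compat_l; lra).
    assert (Cmod (b 0%Z) * Cmod w ^ n <= Cmod (b 0%Z) * sqrt (Cmod w)) by (apply Rmult_le_compat_l; lra).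
    assert (LP * Cmod w <= LP * sqrt (Cmod w)) by (apply Rmult_le_compat_l; lra).
    assert (LQ * Cmod w <= LQ * sqrt (Cmod w)) by (apply Rmult_le_compat_l; lra).
    nra. }
  split.
  {
    intros w Hw. assert (Hw0 : w <> 0%C) by (intro E0; rewrite E0, Cmod_0 in Hw; lra).
    assert (Hwn : (w ^ n)%C <> 0%C) by (apply Cpow_nz; auto).
    assert (HwS : (w ^ S n)%C <> 0%C) by (apply Cpow_nz; auto).
    assert (Hwp : 0 < Cmod w) by lra.
    assert (Hw1 : Cmod w ^ n <= Cmod w) by (apply pow_le_self; auto; lra).
    assert (Hpn : 0 < Cmod w ^ n) by (apply pow_lt; lra).
    assert (Hsq : Cmod w <= sqrt (Cmod w)) by (apply sqrt_ge_self; lra).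
    assert (Hgen : forall (Rf Rf' : C -> C) (bb : C) (L D : R),
      0 <= L -> 0 <= D -> Cmod (Rf w - bb)%C <= L * Cmod w -> Cmod (Rf' w) <= D ->
      Cmod (- RtoC nR * (Rf w - bb) / w ^ S n + Rf' w / w ^ n)%C * Cmod w ^ S n <= (nR * L + D) * Cmod w).
    { intros Rf Rf' bb L D HL HD H1 H2.
      eapply Rle_trans. apply Rmult_le_compat_r. apply pow_le, Cmod_ge_0. apply Cmod_triangle.
      unfold Cdiv. rewrite !Cmod_mult, Cmod_opp, Cmod_R, Rabs_pos_eq by lra.
      rewrite !Cmod_inv, !Cmod_pow by auto.
      replace ((nR * Cmod (Rf w - bb)%C * / Cmod w ^ S n + Cmod (Rf' w) * / Cmod w ^ n) * Cmod w ^ S n)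
        with (nR * Cmod (Rf w - bb)%C + Cmod (Rf' w) * Cmod w)
        by (simpl; field; split; lra).
      assert (nR * Cmod (Rf w - bb)%C <= nR * (L * Cmod w)) by (apply Rmult_le_compat_l; lra).
      assert (Cmod (Rf' w) * Cmod w <= D * Cmod w) by (apply Rmult_le_compat_r; lra).
      lra. }
    assert (HAw : Cmod A * Cmod w ^ n <= Cmod A * Cmod w) by (apply Rmult_le_compat_l; lra).
    split.
    - unfold e1. eapply Rle_trans. apply Rmult_le_compat_r. apply pow_le, Cmod_ge_0. apply Cmod_triangle.
      rewrite Rmult_plus_distr_r.
      assert (H1 := Hgen P P' an LP DP HLP0 HDP (HLP w ltac:(lra)) (HP'b w ltac:(lra))).
      fold (GP' w) in H1.
      assert (H2 : Cmod (A / w)%C * Cmod w ^ S n = Cmod A * Cmod w ^ n).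
      { rewrite Cmod_div by auto. simpl. field. lra. }
      rewrite H2.
      apply Rle_trans with ((nR * LP + DP) * Cmod w + Cmod A * Cmod w). lra.
      apply Rle_trans with ((nR * (LP + LQ) + DP + DQ + Cmod A) * Cmod w).
      { assert (0 <= nR * LQ + DQ) by nra. nra. }
      apply Rmult_le_compat_l; auto. nra.
    - unfold e2. eapply Rle_trans. apply Rmult_le_compat_r. apply pow_le, Cmod_ge_0. apply Cmod_triangle.
      rewrite Rmult_plus_distr_r. rewrite Cmod_conj.
      assert (H1 := Hgen Q Q' bn LQ DQ HLQ0 HDQ (HLQ w ltac:(lra)) (HQ'b w ltac:(lra))).
      fold (GQ' w) in H1.
      assert (H2 : Cmod (A / Cconj w)%C * Cmod w ^ S n = Cmod A * Cmod w ^ n).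
      { rewrite Cmod_div, Cmod_conj by (apply Cconj_nz; auto). simpl. field. lra. }
      rewrite H2.
      apply Rle_trans with ((nR * LQ + DQ) * Cmod w + Cmod A * Cmod w). lra.
      apply Rle_trans with ((nR * (LP + LQ) + DP + DQ + Cmod A) * Cmod w).
      { assert (0 <= nR * LP + DP) by nra. nra. }
      apply Rmult_le_compat_l; auto. nra. }
  intros s x y Hs Hs2 Hx Hy Hh.
  assert (Hs1 : s <= /4) by lra.
  assert (Hxr : Cmod x <= r / 2 / 6) by lra. assert (Hyr : Cmod y <= r / 2 / 6) by lra.
  assert (Hx0 : x <> 0%C) by (intro E0; rewrite E0, Cmod_0 in Hx; lra).
  assert (Hy0 : y <> 0%C) by (intro E0; rewrite E0, Cmod_0 in Hy; lra).
  assert (Hid : (E y - E x - e1 x * (y - x) - e2 x * Cconj (y - x))%C =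
     ((GP y - GP x - GP' x * (y - x)) + Cconj (GQ y - GQ x - GQ' x * (y - x)) +
      (RtoC 2 * A * RtoC (ln (Cmod y)) - RtoC 2 * A * RtoC (ln (Cmod x))
        - A / x * (y - x) - A / Cconj x * Cconj (y - x)))%C).
  { unfold E, e1, e2. cbv beta. rewrite !Cminus_conj, !Cmult_conj, !Cminus_conj. assert (Cconj x <> 0%C) by (apply Cconj_nz; auto). field. auto. }
  rewrite Hid.
  assert (HG1 := G_taylor P P' an n LP DP KP s x y ltac:(lra) ltac:(lra) ltac:(lra) ltac:(lra) ltac:(lra)
                  HLP0 HDP HKP (HLP y ltac:(lra)) (HP'b x Hxr) (HPt x y Hxr Hyr)).
  assert (HG2 := G_taylor Q Q' bn n LQ DQ KQ s x y ltac:(lra) ltac:(lra) ltac:(lra) ltac:(lra) ltac:(lra)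
                  HLQ0 HDQ HKQ (HLQ y ltac:(lra)) (HQ'b x Hxr) (HQt x y Hxr Hyr)).
  assert (HL := log_part A x y s Hs ltac:(lra) Hh).
  fold nR in HG1, HG2.
  assert (Hsp : 0 <= s ^ (n + 2)) by (apply pow_le; lra).
  assert (HL' : Cmod (RtoC 2 * A * RtoC (ln (Cmod y)) - RtoC 2 * A * RtoC (ln (Cmod x))
        - A / x * (y - x) - A / Cconj x * Cconj (y - x))%C * s ^ (n + 2) <= 48 * Cmod A * Cmod (y - x)%C ^ 2).
  { rewrite pow_add. assert (Hsn : s ^ n <= 1) by (apply pow_le1; lra).
    assert (Hsn0 : 0 <= s ^ n) by (apply pow_le; lra).
    set (X := Cmod (RtoC 2 * A * RtoC (ln (Cmod y)) - RtoC 2 * A * RtoC (ln (Cmod x))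
        - A / x * (y - x) - A / Cconj x * Cconj (y - x))%C) in *.
    assert (HX : 0 <= X * s ^ 2) by (apply Rmult_le_pos; [apply Cmod_ge_0|apply pow_le; lra]).
    apply Rle_trans with (X * s ^ 2). 
    { replace (X * (s ^ n * s ^ 2)) with ((X * s ^ 2) * s ^ n) by ring. nra. }
    auto. }
  eapply Rle_trans. apply Rmult_le_compat_r; auto.
  eapply Rle_trans; [apply Cmod_triangle|]. apply Rplus_le_compat_r. apply Cmod_triangle.
  rewrite Cmod_conj. unfold GP, GQ, GP' , GQ' in *. lra.
Qed.

End Laurent.

Theorem theorem3p2 (z0 : C) (r : R) (f : C -> C) (n : nat) (a b : Z -> C)
  (A : C) (hr : 0 < r) (hn : (1 <= n)%nat)
  (hab : Cmod (a (- Z.of_nat n)%Z) <> Cmod (b (- Z.of_nat n)%Z))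
  (hf : forall z, 0 < Cmod (Cminus z z0) < r ->
     exists sa sb : C,
       is_series (V := C_NormedModule) (laurent_term a n (Cminus z z0)) sa /\
       is_series (V := C_NormedModule) (laurent_term b n (Cminus z z0)) sb /\
       f z = Cplus (Cplus sa (Cconj sb))
                   (Cmult (Cmult (RtoC 2) A) (RtoC (ln (Cmod (Cminus z z0)))))) :
  exists rho : R, 0 < rho <= r /\
  exists R0 : R, forall eta : C,
    let c := Cminus eta (Cplus (a 0%Z) (Cconj (b 0%Z))) in
    R0 < Cmod c ->
    let w := Cdiv (RtoC ((Cmod (a (- Z.of_nat n)%Z))^2 - (Cmod (b (- Z.of_nat n)%Z))^2))
                  (Cminus (Cmult (Cconj (a (- Z.of_nat n)%Z)) c)
                          (Cmult (Cconj (b (- Z.of_nat n)%Z)) (Cconj c))) in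
    let F := fun z => Cminus (f z) eta in
    (* (1) exactly n solutions of f z = eta in the punctured disc of radius rho *)
    (exists sols : list C, length sols = n /\ NoDup sols /\
       forall z, In z sols <-> (0 < Cmod (Cminus z z0) < rho /\ f z = eta)) /\
    (* (2) S = {zeta | (zeta - z0)^n = w} is a prediction set *)
    (forall zeta, Cpow (Cminus zeta z0) n = w ->
       exists L, HN_converges_to F zeta L /\
                 0 < Cmod (Cminus L z0) < rho /\ f L = eta) /\
    (forall zeta1 zeta2 L,
       Cpow (Cminus zeta1 z0) n = w -> Cpow (Cminus zeta2 z0) n = w ->
       HN_converges_to F zeta1 L -> HN_converges_to F zeta2 L -> zeta1 = zeta2) /\
    (forall z, 0 < Cmod (Cminus z z0) < rho -> f z = eta ->
       exists zeta, Cpow (Cminus zeta z0) n = w /\ HN_converges_to F zeta z).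
Proof.
  destruct (laurent_model z0 r f n a b A hr hn hf) as
    (E & e1 & e2 & rs & C0 & C1 & C2 & Hrs & Hrsr & HC0 & HC1 & HC2 & HH0 & HH1 & HH2 & HH3).
  destruct (model_thm z0 f n (a (- Z.of_nat n)%Z) (b (- Z.of_nat n)%Z) (Cplus (a 0%Z) (Cconj (b 0%Z)))
              E e1 e2 rs C0 C1 C2 hn hab Hrs HC0 HC1 HC2 HH0 HH1 HH2 HH3) as [rho0 [Hrho0 [R00 HR00]]].
  exists rho0. split. lra. exists R00. exact HR00.
Qed.
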